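(* Let $\mathbf A\in\mathbb K^{m\times n}$, $\mathbf b\in\mathbb K^m$, $\mathbf c\in\mathbb K^n$ satisfy assumption (A), and let $\boldsymbol\mu\in\mathbb K$ be positive. Then the problem $$\text{minimize } \mathbf c^T\mathbf x-\boldsymbol\mu\Big(\sum_{j=1}^n\log\mathbf x_j+\sum_{i=1}^m\log\mathbf w_i\Big)\quad\text{s.t. } \mathbf A\mathbf x+\mathbf w=\mathbf b,\ \mathbf x>0,\ \mathbf w>0$$ and the problem $$\text{maximize } -\mathbf b^T\mathbf y+\boldsymbol\mu\Big(\sum_{j=1}^n\log\mathbf s_j+\sum_{i=1}^m\log\mathbf y_i\Big)\quad\text{s.t. } -\mathbf A^T\mathbf y+\mathbf s=\mathbf c,\ \mathbf s>0,\ \mathbf y>0,$$ where the variables range over vectors with entries in $\mathbb K$ and objective values are compared in $H(\bar{\mathbb R}_{\exp})$, each have a unique optimal solution. These solutions are $(\mathbf x^{\boldsymbol\mu},\mathbf w^{\boldsymbol\mu})$ and $(\mathbf y^{\boldsymbol\mu},\mathbf s^{\boldsymbol\mu})$ respectively.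
   Context: $\mathbb K$ is the field of germs at $+\infty$ of real functions definable in $\bar{\mathbb R}^{\mathbb R}$, the ordered real field expanded by the power functions $t\mapsto t^r$ ($r\in\mathbb R$; set to $0$ for $t\le0$). It is real closed, with $\mathbf f>0$ iff $\mathbf f(t)>0$ for large $t$. $\bar{\mathbb R}_{\exp}$ is the o-minimal expansion of the ordered real field by the exponential function. $H(\bar{\mathbb R}_{\exp})$ is the ordered field of germs at $+\infty$ of functions definable in $\bar{\mathbb R}_{\exp}$. It contains $\mathbb K$, and for positive $\mathbf f\in\mathbb K$, $\log\mathbf f$ denotes the germ of $t\mapsto\log \mathbf f(t)$, an element of $H(\bar{\mathbb R}_{\exp})$. Assumption (A): there exist $\mathbf x^\circ,\mathbf w^\circ,\mathbf y^\circ,\mathbf s^\circ$ with positive entries in $\mathbb K$ such that $\mathbf A\mathbf x^\circ+\mathbf w^\circ=\mathbf b$ and $-\mathbf A^T\mathbf y^\circ+\mathbf s^\circ=\mathbf c$. $(\mathbf x^{\boldsymbol\mu},\mathbf w^{\boldsymbol\mu},\mathbf y^{\boldsymbol\mu},\mathbf s^{\boldsymbol\mu})$ denotes the unique solution over $\mathbb K$ (which exists under (A)) of $\mathbf A\mathbf x+\mathbf w=\mathbf b$, $-\mathbf A^T\mathbf y+\mathbf s=\mathbf c$, $\mathbf w_i\mathbf y_i=\boldsymbol\mu$ ($i\in[m]$), $\mathbf x_j\mathbf s_j=\boldsymbol\mu$ ($j\in[n]$), $\mathbf x,\mathbf w,\mathbf y,\mathbf s>0$. *)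

(* Defs.v *)
From Stdlib Require Import Reals Lra List Arith.
Import ListNotations.
Open Scope R_scope.

Definition rpow (r t : R) : R :=
  if Rlt_dec 0 t then Rpower t r else 0.

(* Terms and first-order formulas of the language of ordered rings expanded by
   the power functions, with real parameters (constants). *)
Inductive term : Type :=
| TVar : nat -> term
| TCst : R -> term
| TAdd : term -> term -> term
| TMul : term -> term -> term
| TOpp : term -> term
| TPow : R -> term -> term.

Inductive formula : Type :=
| FEq : term -> term -> formula
| FLt : term -> term -> formula
| FNot : formula -> formula
| FAnd : formula -> formula -> formula
| FEx : nat -> formula -> formula.

Definition upd (e : nat -> R) (n : nat) (a : R) : nat -> R :=
  fun k => if Nat.eqb k n then a else e k.

Fixpoint teval (e : nat -> R) (u : term) : R :=
  match u with
  | TVar n => e n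
  | TCst r => r
  | TAdd u1 u2 => teval e u1 + teval e u2
  | TMul u1 u2 => teval e u1 * teval e u2
  | TOpp u1 => - teval e u1
  | TPow r u1 => rpow r (teval e u1)
  end.

Fixpoint sat (e : nat -> R) (phi : formula) : Prop :=
  match phi with
  | FEq u1 u2 => teval e u1 = teval e u2
  | FLt u1 u2 => teval e u1 < teval e u2
  | FNot p => ~ sat e p
  | FAnd p q => sat e p /\ sat e q
  | FEx n p => exists a, sat (upd e n a) p
  end.

Definition definable_fun (f : R -> R) : Prop :=
  exists phi : formula, forall e : nat -> R, sat e phi <-> e 1%nat = f (e 0%nat).

Definition eventually (P : R -> Prop) : Prop :=
  exists T : R, forall t, T < t -> P t.

Definition germ_eq (f g : R -> R) : Prop := eventually (fun t => f t = g t).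

(* An element of K is represented by a (total) definable function; two
   representatives denote the same element of K iff they are germ_eq. *)
Definition inK (f : R -> R) : Prop := definable_fun f.

Definition Kpos (f : R -> R) : Prop := eventually (fun t => 0 < f t).

Definition vec := nat -> R -> R.          (* component j, then the variable t *)
Definition mat := nat -> nat -> R -> R.   (* entry (i,j), then t *)

Definition Kvec (n : nat) (v : vec) : Prop := forall j, (j < n)%nat -> inK (v j).
Definition Kmat (m n : nat) (A : mat) : Prop :=
  forall i j, (i < m)%nat -> (j < n)%nat -> inK (A i j).
Definition posvec (n : nat) (v : vec) : Prop := forall j, (j < n)%nat -> Kpos (v j).

Definition rsum (n : nat) (f : nat -> R) : R := fold_right Rplus 0 (map f (seq 0 n)).

Definition primal_eq (m n : nat) (A : mat) (b x w : vec) : Prop :=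
  forall i, (i < m)%nat ->
    germ_eq (fun t => rsum n (fun j => A i j t * x j t) + w i t) (b i).

Definition dual_eq (m n : nat) (A : mat) (c y s : vec) : Prop :=
  forall j, (j < n)%nat ->
    germ_eq (fun t => - rsum m (fun i => A i j t * y i t) + s j t) (c j).

Definition assumptionA (m n : nat) (A : mat) (b c : vec) : Prop :=
  exists x0 w0 y0 s0 : vec,
    Kvec n x0 /\ Kvec m w0 /\ Kvec m y0 /\ Kvec n s0 /\
    posvec n x0 /\ posvec m w0 /\ posvec m y0 /\ posvec n s0 /\
    primal_eq m n A b x0 w0 /\ dual_eq m n A c y0 s0.

Definition central_path (m n : nat) (A : mat) (b c : vec) (mu : R -> R)
  (x w y s : vec) : Prop :=
  Kvec n x /\ Kvec m w /\ Kvec m y /\ Kvec n s /\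
  posvec n x /\ posvec m w /\ posvec m y /\ posvec n s /\
  primal_eq m n A b x w /\ dual_eq m n A c y s /\
  (forall i, (i < m)%nat -> germ_eq (fun t => w i t * y i t) mu) /\
  (forall j, (j < n)%nat -> germ_eq (fun t => x j t * s j t) mu).

Definition primal_feasible (m n : nat) (A : mat) (b : vec) (x w : vec) : Prop :=
  Kvec n x /\ Kvec m w /\ posvec n x /\ posvec m w /\ primal_eq m n A b x w.

Definition dual_feasible (m n : nat) (A : mat) (c : vec) (y s : vec) : Prop :=
  Kvec m y /\ Kvec n s /\ posvec n s /\ posvec m y /\ dual_eq m n A c y s.

(* objective value, as a germ in H(R_exp) (evaluated at t) *)
Definition primal_obj (m n : nat) (c : vec) (mu : R -> R) (x w : vec) (t : R) : R :=
  rsum n (fun j => c j t * x j t)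
  - mu t * (rsum n (fun j => ln (x j t)) + rsum m (fun i => ln (w i t))).

Definition dual_obj (m n : nat) (b : vec) (mu : R -> R) (y s : vec) (t : R) : R :=
  - rsum m (fun i => b i t * y i t)
  + mu t * (rsum n (fun j => ln (s j t)) + rsum m (fun i => ln (y i t))).

(* optimality, comparing objective values in the ordered field H(R_exp):
   f <= g there iff f t <= g t for all large t *)
Definition primal_optimal m n A b c mu (x w : vec) : Prop :=
  primal_feasible m n A b x w /\
  forall x' w', primal_feasible m n A b x' w' ->
    eventually (fun t => primal_obj m n c mu x w t <= primal_obj m n c mu x' w' t).

Definition dual_optimal m n A b c mu (y s : vec) : Prop :=
  dual_feasible m n A c y s /\
  forall y' s', dual_feasible m n A c y' s' ->
    eventually (fun t => dual_obj m n b mu y' s' t <= dual_obj m n b mu y s t).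

Definition primal_unique_optimal m n A b c mu (x w : vec) : Prop :=
  primal_optimal m n A b c mu x w /\
  forall x' w', primal_optimal m n A b c mu x' w' ->
    (forall j, (j < n)%nat -> germ_eq (x' j) (x j)) /\
    (forall i, (i < m)%nat -> germ_eq (w' i) (w i)).

Definition dual_unique_optimal m n A b c mu (y s : vec) : Prop :=
  dual_optimal m n A b c mu y s /\
  forall y' s', dual_optimal m n A b c mu y' s' ->
    (forall i, (i < m)%nat -> germ_eq (y' i) (y i)) /\
    (forall j, (j < n)%nat -> germ_eq (s' j) (s j)).

(* Main.v *)
From Pilot Require Import Defs.
From Stdlib Require Import Reals List Arith.
Open Scope R_scope.
From Stdlib Require Import Lra Lia Classical FunctionalExtensionality ClassicalEpsilon.
Import ListNotations.
Import Pilot.Defs.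
Open Scope R_scope.

Lemma fold_add a l : fold_right Rplus a l = fold_right Rplus 0 l + a.
Proof. induction l as [|x l IH]; simpl; [lra|rewrite IH; lra]. Qed.

Lemma rsum_0 f : rsum 0 f = 0.
Proof. reflexivity. Qed.

Lemma rsum_S n f : rsum (S n) f = rsum n f + f n.
Proof.
  unfold rsum. rewrite seq_S, map_app, fold_right_app. simpl.
  rewrite fold_add. lra.
Qed.

Lemma rsum_ext n f g : (forall j, (j < n)%nat -> f j = g j) -> rsum n f = rsum n g.
Proof.
  induction n as [|n IH]; intros H; [reflexivity|].
  rewrite !rsum_S, IH by (intros; apply H; lia). rewrite H by lia. reflexivity.
Qed.

Lemma rsum_plus n f g : rsum n (fun j => f j + g j) = rsum n f + rsum n g.
Proof. induction n as [|n IH]; [rewrite ?rsum_0; lra|rewrite !rsum_S, IH; lra]. Qed.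

Lemma rsum_minus n f g : rsum n (fun j => f j - g j) = rsum n f - rsum n g.
Proof. induction n as [|n IH]; [rewrite ?rsum_0; lra|rewrite !rsum_S, IH; lra]. Qed.

Lemma rsum_opp n f : rsum n (fun j => - f j) = - rsum n f.
Proof. induction n as [|n IH]; [rewrite ?rsum_0; lra|rewrite !rsum_S, IH; lra]. Qed.

Lemma rsum_scal n k f : rsum n (fun j => k * f j) = k * rsum n f.
Proof. induction n as [|n IH]; [rewrite ?rsum_0; lra|rewrite !rsum_S, IH; lra]. Qed.

Lemma rsum_scal_r n k f : rsum n (fun j => f j * k) = rsum n f * k.
Proof. induction n as [|n IH]; [rewrite ?rsum_0; lra|rewrite !rsum_S, IH; lra]. Qed.

Lemma rsum_zero n : rsum n (fun _ => 0) = 0.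
Proof. induction n as [|n IH]; [rewrite ?rsum_0; lra|rewrite !rsum_S, IH; lra]. Qed.

Lemma rsum_swap n m (f : nat -> nat -> R) :
  rsum n (fun j => rsum m (fun i => f i j)) = rsum m (fun i => rsum n (fun j => f i j)).
Proof.
  induction n as [|n IH].
  - rewrite rsum_0. symmetry. apply (rsum_zero m).
  - rewrite rsum_S, IH. rewrite <- rsum_plus. apply rsum_ext. intros. rewrite rsum_S. lra.
Qed.

Lemma rsum_le n f g : (forall j, (j < n)%nat -> f j <= g j) -> rsum n f <= rsum n g.
Proof.
  induction n as [|n IH]; intros H; [rewrite ?rsum_0; lra|].
  rewrite !rsum_S. specialize (H n (Nat.lt_succ_diag_r n)) as Hn.
  assert (rsum n f <= rsum n g) by (apply IH; intros; apply H; lia). lra.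
Qed.

Lemma rsum_nonneg n f : (forall j, (j < n)%nat -> 0 <= f j) -> 0 <= rsum n f.
Proof. intros H. rewrite <- (rsum_zero n). apply rsum_le. auto. Qed.

Lemma rsum_nonneg_le n f k : (forall j, (j < n)%nat -> 0 <= f j) -> (k < n)%nat -> f k <= rsum n f.
Proof.
  induction n as [|n IH]; intros H Hk; [lia|].
  rewrite rsum_S. destruct (Nat.eq_dec k n) as [->|Hne].
  - assert (0 <= rsum n f) by (apply rsum_nonneg; intros; apply H; lia). lra.
  - assert (f k <= rsum n f) by (apply IH; [intros; apply H; lia|lia]).
    assert (0 <= f n) by (apply H; lia). lra.
Qed.

Lemma rsum_zero_inv n f : (forall j, (j < n)%nat -> 0 <= f j) -> rsum n f = 0 ->
  forall j, (j < n)%nat -> f j = 0.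
Proof.
  intros H E j Hj. pose proof (rsum_nonneg_le n f j H Hj). pose proof (H j Hj). lra.
Qed.

Lemma rsum_delta n k d : (k < n)%nat -> rsum n (fun j => if Nat.eqb j k then d else 0) = d.
Proof.
  induction n as [|n IH]; intros Hk; [lia|].
  rewrite rsum_S. destruct (Nat.eq_dec k n) as [->|Hne].
  - rewrite Nat.eqb_refl. rewrite (rsum_ext n _ (fun _ => 0)), rsum_zero; [lra|].
    intros j Hj. destruct (Nat.eqb_spec j n); [lia|reflexivity].
  - rewrite IH by lia. destruct (Nat.eqb_spec n k); [lia|lra].
Qed.

Lemma ev_mono (P Q : R -> Prop) : (forall t, P t -> Q t) -> eventually P -> eventually Q.
Proof. intros H [T HT]. exists T. auto. Qed.

Lemma ev_and (P Q : R -> Prop) : eventually P -> eventually Q -> eventually (fun t => P t /\ Q t).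
Proof.
  intros [T1 H1] [T2 H2]. exists (Rmax T1 T2). intros t Ht.
  split; [apply H1|apply H2]; pose proof (Rmax_l T1 T2); pose proof (Rmax_r T1 T2); lra.
Qed.

Lemma ev_forall n (P : nat -> R -> Prop) :
  (forall j, (j < n)%nat -> eventually (P j)) -> eventually (fun t => forall j, (j < n)%nat -> P j t).
Proof.
  induction n as [|n IH]; intros H.
  - exists 0. intros. lia.
  - destruct (ev_and _ _ (IH (fun j Hj => H j (Nat.lt_lt_succ_r _ _ Hj))) (H n (Nat.lt_succ_diag_r n))) as [T HT].
    exists T. intros t Ht j Hj. destruct (HT t Ht) as [A B].
    destruct (Nat.eq_dec j n) as [->|]; [exact B|apply A; lia].
Qed.

Lemma ln_le_sub1 r : 0 < r -> ln r <= r - 1.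
Proof.
  intros Hr. pose proof (exp_ineq1_le (ln r)). rewrite exp_ln in H by lra. lra.
Qed.

Lemma ln_lt_sub1 r : 0 < r -> r <> 1 -> ln r < r - 1.
Proof.
  intros Hr Hne. assert (ln r <> 0).
  { intro E. apply Hne. rewrite <- (exp_ln r) by lra. rewrite E, exp_0. reflexivity. }
  pose proof (exp_ineq1 (ln r) H). rewrite exp_ln in H0 by lra. lra.
Qed.

Definition phi (r : R) := r - 1 - ln r.

Lemma phi_nonneg r : 0 < r -> 0 <= phi r.
Proof. intros. unfold phi. pose proof (ln_le_sub1 r H). lra. Qed.

Lemma phi_zero r : 0 < r -> phi r = 0 -> r = 1.
Proof.
  intros H E. destruct (Req_dec r 1) as [|Hne]; auto.
  pose proof (ln_lt_sub1 r H Hne). unfold phi in E. lra.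
Qed.

Lemma ln_ge_1_inv r : 0 < r -> 1 - / r <= ln r.
Proof.
  intros Hr. pose proof (ln_le_sub1 (/ r) (Rinv_0_lt_compat r Hr)).
  rewrite ln_Rinv in H by lra. lra.
Qed.

Lemma ln1p_lower u : -1/2 <= u -> u - 2 * u * u <= ln (1 + u).
Proof.
  intros Hu. pose proof (ln_ge_1_inv (1 + u) ltac:(lra)).
  assert (u - 2 * u * u <= 1 - / (1 + u)); [|lra].
  assert (1 - / (1 + u) = u / (1 + u)) as -> by (field; lra).
  apply Rmult_le_reg_r with (1 + u); [lra|].
  replace (u / (1 + u) * (1 + u)) with u by (field; lra).
  assert (0 <= u * u * (1 + 2 * u)). { apply Rmult_le_pos; [nra|lra]. }
  nra.
Qed.

Lemma quad_zero G Q eta : 0 < eta -> 0 <= Q ->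
  (forall h, Rabs h <= eta -> 0 <= h * G + h * h * Q) -> G = 0.
Proof.
  intros He HQ H. destruct (Req_dec G 0) as [|HG]; auto. exfalso.
  set (t := Rmin (eta / Rabs G) (/ (2 * (Q + 1)))).
  assert (HaG : 0 < Rabs G) by (apply Rabs_pos_lt; auto).
  assert (Ht0 : 0 < t).
  { unfold t. apply Rmin_pos. apply Rdiv_lt_0_compat; auto.
    apply Rinv_0_lt_compat; lra. }
  assert (Ht1 : t <= eta / Rabs G) by apply Rmin_l.
  assert (Ht2 : t <= / (2 * (Q + 1))) by apply Rmin_r.
  specialize (H (- G * t)).
  assert (Rabs (- G * t) <= eta).
  { rewrite Rabs_mult, Rabs_Ropp, (Rabs_right t) by lra.
    apply Rmult_le_compat_l with (r := Rabs G) in Ht1; [|lra].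
    replace (Rabs G * (eta / Rabs G)) with eta in Ht1 by (field; lra). lra. }
  specialize (H H0).
  assert (tQ : t * Q < 1).
  { assert (t * (2 * (Q + 1)) <= 1).
    { apply Rmult_le_compat_r with (r := 2 * (Q + 1)) in Ht2; [|lra].
      replace (/ (2 * (Q + 1)) * (2 * (Q + 1))) with 1 in Ht2 by (field; lra). lra. }
    nra. }
  assert (0 < G * G) by (apply Rsqr_pos_lt in HG; unfold Rsqr in HG; exact HG).
  replace (- G * t * G + - G * t * (- G * t) * Q) with (G * G * t * (t * Q - 1)) in H by ring.
  assert (0 < G * G * t) by (apply Rmult_lt_0_compat; auto).
  nra.
Qed.

Definition ContAt (n:nat) (F : (nat->R)->R) (x : nat->R) : Prop :=
  forall eps, 0 < eps -> exists d, 0 < d /\ forall y, (forall j, (j<n)%nat -> Rabs (y j - x j) < d) -> Rabs (F y - F x) < eps.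

Lemma ContAt_const n k x : ContAt n (fun _ => k) x.
Proof. intros e He. exists 1. split; [lra|]. intros. rewrite Rminus_diag, Rabs_R0. lra. Qed.

Lemma ContAt_proj n j x : (j < n)%nat -> ContAt n (fun y => y j) x.
Proof. intros Hj e He. exists e. split; auto. Qed.

Lemma ContAt_plus n F G x : ContAt n F x -> ContAt n G x -> ContAt n (fun y => F y + G y) x.
Proof.
  intros HF HG e He. destruct (HF (e/2)) as [d1 [Hd1 H1]]; [lra|].
  destruct (HG (e/2)) as [d2 [Hd2 H2]]; [lra|].
  exists (Rmin d1 d2). split; [apply Rmin_pos; auto|]. intros y Hy.
  assert (A : Rabs (F y - F x) < e/2).
  { apply H1. intros j Hj. specialize (Hy j Hj). pose proof (Rmin_l d1 d2). lra. }
  assert (B : Rabs (G y - G x) < e/2).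
  { apply H2. intros j Hj. specialize (Hy j Hj). pose proof (Rmin_r d1 d2). lra. }
  replace (F y + G y - (F x + G x)) with ((F y - F x) + (G y - G x)) by ring.
  pose proof (Rabs_triang (F y - F x) (G y - G x)). lra.
Qed.

Lemma ContAt_scal n k F x : ContAt n F x -> ContAt n (fun y => k * F y) x.
Proof.
  intros HF e He. destruct (HF (e / (Rabs k + 1))) as [d [Hd H]].
  { apply Rdiv_lt_0_compat; [lra|]. pose proof (Rabs_pos k); lra. }
  exists d. split; auto. intros y Hy. specialize (H y Hy).
  replace (k * F y - k * F x) with (k * (F y - F x)) by ring.
  rewrite Rabs_mult. pose proof (Rabs_pos k). pose proof (Rabs_pos (F y - F x)).
  assert (Rabs k * Rabs (F y - F x) <= (Rabs k + 1) * Rabs (F y - F x)) by nra.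
  assert ((Rabs k + 1) * Rabs (F y - F x) < (Rabs k + 1) * (e / (Rabs k + 1))).
  { apply Rmult_lt_compat_l; [lra|auto]. }
  replace ((Rabs k + 1) * (e / (Rabs k + 1))) with e in H3 by (field; lra). lra.
Qed.

Lemma ContAt_opp n F x : ContAt n F x -> ContAt n (fun y => - F y) x.
Proof.
  intros H. pose proof (ContAt_scal n (-1) F x H) as H'.
  intros e He. destruct (H' e He) as [d [Hd Hd']]. exists d. split; auto.
  intros y Hy. specialize (Hd' y Hy). replace (- F y - - F x) with (-1 * F y - -1 * F x) by ring. auto.
Qed.

Lemma ContAt_minus n F G x : ContAt n F x -> ContAt n G x -> ContAt n (fun y => F y - G y) x.
Proof. intros. apply (ContAt_plus n F (fun y => - G y)); auto. apply ContAt_opp; auto. Qed.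

Lemma ContAt_mult_r n F k x : ContAt n F x -> ContAt n (fun y => F y * k) x.
Proof.
  intros H e He. destruct (ContAt_scal n k F x H e He) as [d [Hd Hd']]. exists d. split; auto.
  intros y Hy. specialize (Hd' y Hy). rewrite (Rmult_comm (F y)), (Rmult_comm (F x)). auto.
Qed.

Lemma ContAt_rsum n N (f : nat -> (nat -> R) -> R) x :
  (forall j, (j < N)%nat -> ContAt n (f j) x) -> ContAt n (fun y => rsum N (fun j => f j y)) x.
Proof.
  induction N as [|N IH]; intros H.
  - intros e He. exists 1. split; [lra|]. intros. rewrite !rsum_0, Rminus_diag, Rabs_R0. lra.
  - assert (C : ContAt n (fun y => rsum N (fun j => f j y) + f N y) x).
    { apply ContAt_plus; [apply IH; intros; apply H; lia|apply H; lia]. }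
    intros e He. destruct (C e He) as [d [Hd Hd']]. exists d. split; auto.
    intros y Hy. rewrite !rsum_S. auto.
Qed.

Lemma ln_div x y : 0 < x -> 0 < y -> ln (x / y) = ln x - ln y.
Proof.
  intros. unfold Rdiv. rewrite ln_mult, ln_Rinv; try lra. apply Rinv_0_lt_compat; lra.
Qed.

Lemma ln_lip x y : 0 < x -> Rabs (y - x) < x / 2 -> Rabs (ln y - ln x) <= 2 * Rabs (y - x) / x.
Proof.
  intros Hx Hyx. assert (Hy : x / 2 < y).
  { destruct (Rcase_abs (y - x)); [rewrite Rabs_left in Hyx by lra|rewrite Rabs_right in Hyx by lra]; lra. }
  pose proof (ln_le_sub1 (y / x) ltac:(apply Rdiv_lt_0_compat; lra)) as A.
  pose proof (ln_le_sub1 (x / y) ltac:(apply Rdiv_lt_0_compat; lra)) as B.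
  rewrite ln_div in A, B by lra.
  assert (A' : y / x - 1 = (y - x) / x) by (field; lra).
  assert (B' : x / y - 1 <= 2 * Rabs (y - x) / x).
  { assert (x / y - 1 = (x - y) / y) as -> by (field; lra).
    unfold Rdiv. apply Rle_trans with (Rabs (y - x) * / y).
    - apply Rmult_le_compat_r. { left; apply Rinv_0_lt_compat; lra. }
      rewrite Rabs_minus_sym. apply Rle_abs.
    - apply Rle_trans with (Rabs (y - x) * (2 / x)).
      + apply Rmult_le_compat_l; [apply Rabs_pos|].
        apply Rle_trans with (/ (x/2)). { apply Rinv_le_contravar; lra. }
        right. field. lra.
      + right. field. lra. }
  assert (C : (y - x) / x <= 2 * Rabs (y - x) / x).
  { unfold Rdiv. apply Rmult_le_compat_r. { left; apply Rinv_0_lt_compat; lra. }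
    pose proof (Rle_abs (y - x)). pose proof (Rabs_pos (y - x)). lra. }
  apply Rabs_le. split; lra.
Qed.

Lemma ContAt_ln n F x : ContAt n F x -> 0 < F x -> ContAt n (fun y => ln (F y)) x.
Proof.
  intros H Hpos e He. destruct (H (Rmin (F x / 2) (e * F x / 2))) as [d [Hd Hd']].
  { apply Rmin_pos; [lra|]. apply Rdiv_lt_0_compat; [nra|lra]. }
  exists d. split; auto. intros y Hy. specialize (Hd' y Hy).
  pose proof (Rmin_l (F x / 2) (e * F x / 2)). pose proof (Rmin_r (F x / 2) (e * F x / 2)).
  pose proof (ln_lip (F x) (F y) Hpos ltac:(lra)).
  assert (2 * Rabs (F y - F x) / F x < e).
  { apply Rmult_lt_reg_r with (F x); auto. unfold Rdiv. rewrite Rmult_assoc, Rinv_l by lra. lra. }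
  lra.
Qed.

From mathcomp Require all_boot all_order all_algebra all_classical all_reals all_analysis Rstruct Rstruct_topology.
Module MC.
From mathcomp Require Import all_boot all_order all_algebra.
From mathcomp Require Import all_classical all_reals all_analysis.
From mathcomp Require Import Rstruct Rstruct_topology.
Import Order.TTheory GRing.Theory Num.Theory.
Local Open Scope ring_scope.
Local Open Scope classical_set_scope.

Definition vecof n (v : 'rV[R]_n) : nat -> R :=
  fun j => match (insub j : option 'I_n) with Some k => v ord0 k | None => 0 end.

Arguments vecof {n}.
Lemma vecof_row n (f : nat -> R) j : (j < n)%N -> vecof (\row_(k < n) f k) j = f j.
Proof. by move=> jn; rewrite /vecof insubT /= mxE. Qed.

Lemma vecof_ord n (v : 'rV[R]_n) (k : 'I_n) : vecof v k = v ord0 k.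
Proof. by rewrite /vecof valK. Qed.

Lemma cont_vecof n F (v : 'rV[R]_n) : ContAt n F (vecof v) -> {for v, continuous (fun w => F (vecof w))}.
Proof.
move=> H. rewrite /prop_for /continuous_at. apply/(@cvgrPdist_lt R R^o _ (nbhs v) _) => e /RltP e0.
have [d [d0 Hd]] := H e e0.
apply/nbhs_ballP; exists d; first exact/RltP.
move=> w [_ Hw].
rewrite -RabsE Rabs_minus_sym; apply/RltP; apply: Hd => j jn.
rewrite /vecof; case: insubP => [k _ _|]; last first.
  move=> /negP H0; exfalso; apply: H0; exact/ssrnat.ltP.
move: (Hw ord0 k). rewrite /ball /= RabsE distrC. by move/RltP.
Qed.

Lemma evt_set n m (lo hi lo' hi' : nat -> R) (G : nat -> (nat->R) -> R) (F : (nat->R)->R) :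
  (forall i x y, (forall j, lt j n -> x j = y j) -> G i x = G i y) ->
  (forall x y, (forall j, lt j n -> x j = y j) -> F x = F y) ->
  (forall i x, lt i m -> ContAt n (G i) x) ->
  (forall x, ((forall j, lt j n -> Rle (lo j) (x j) /\ Rle (x j) (hi j)) /\
              (forall i, lt i m -> Rle (lo' i) (G i x) /\ Rle (G i x) (hi' i))) -> ContAt n F x) ->
  (exists x, (forall j, lt j n -> Rle (lo j) (x j) /\ Rle (x j) (hi j)) /\
              (forall i, lt i m -> Rle (lo' i) (G i x) /\ Rle (G i x) (hi' i))) ->
  exists x, ((forall j, lt j n -> Rle (lo j) (x j) /\ Rle (x j) (hi j)) /\
              (forall i, lt i m -> Rle (lo' i) (G i x) /\ Rle (G i x) (hi' i))) /\
    forall y, ((forall j, lt j n -> Rle (lo j) (y j) /\ Rle (y j) (hi j)) /\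
              (forall i, lt i m -> Rle (lo' i) (G i y) /\ Rle (G i y) (hi' i))) -> Rle (F x) (F y).
Proof.
set S := fun x : nat -> R => (forall j, lt j n -> Rle (lo j) (x j) /\ Rle (x j) (hi j)) /\
              (forall i, lt i m -> Rle (lo' i) (G i x) /\ Rle (G i x) (hi' i)).
move=> Gext Fext Gc Fc [x0 Sx0].
have Sext : forall x y, (forall j, lt j n -> x j = y j) -> S x -> S y.
  move=> x y E [H1 H2]; split.
    by move=> j jn; rewrite -(E j jn); apply: H1.
  by move=> i im; rewrite -(Gext i x y E); apply: H2.
pose A := [set v : 'rV[R]_n | S (vecof v)].
pose B := [set v : 'rV[R]_n | forall k : 'I_n, `[lo k, hi k]%classic (v ord0 k)].
pose C := \bigcap_(i in [set i | lt i m]) ((fun v : 'rV[R]_n => G i (vecof v)) @^-1` `[lo' i, hi' i]%classic).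
have AE : A = B `&` C.
  rewrite /A /B /C; apply/seteqP; split => v /=.
  - move=> [H1 H2]; split.
      move=> k; rewrite /= in_itv /=; rewrite -vecof_ord.
      have [h1 h2] := H1 k (ssrnat.ltP (ltn_ord k)). by apply/andP; split; apply/RleP.
    move=> i /= im; rewrite /= in_itv /=; have [h1 h2] := H2 i im; by apply/andP; split; apply/RleP.
  - move=> [H1 H2]; split.
      move=> j jn; have jn' : (j < n)%N by apply/ssrnat.ltP.
      move: (H1 (Ordinal jn')); rewrite /= in_itv /= -vecof_ord /= => /andP [h1 h2].
      by split; apply/RleP.
    move=> i im; move: (H2 i im); rewrite /= in_itv /= => /andP [h1 h2].
    by split; apply/RleP.
have cA : compact A.
  rewrite AE; apply: compact_closedI.
    apply: (@rV_compact _ _ (fun k => `[lo k, hi k]%classic)) => k; exact: segment_compact.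
  apply: closed_bigI => i im.
  apply: preimage_closed; last exact: (@interval_closed R (BLeft (lo' i)) (BRight (hi' i))).
  move=> v _; apply: cont_vecof; exact: Gc.
have A0 : A !=set0.
  exists (\row_(k < n) x0 k); rewrite /A /=.
  apply: (Sext x0) => // j jn; rewrite vecof_row //; exact/ssrnat.ltP.
have cF : {within A, continuous (fun v => F (vecof v))}.
  apply: continuous_in_subspaceT => v; rewrite inE => Av.
  exact: cont_vecof (Fc _ Av).
have [c cA' cmin] := EVT_min_rV A0 cA cF.
exists (vecof c); split; first by rewrite inE in cA'.
move=> y Sy.
have Sy' : A (\row_(k < n) y k).
  rewrite /A /=; apply: (Sext y) => // j jn; rewrite vecof_row //; exact/ssrnat.ltP.
have := cmin (\row_(k < n) y k); rewrite inE => /(_ Sy') /RleP.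
rewrite (Fext (vecof (\row_(k < n) y k)) y) //.
move=> j jn; rewrite vecof_row //; exact/ssrnat.ltP.
Qed.

End MC.

Definition pfeas m n (a : nat -> nat -> R) (b x w : nat -> R) :=
  (forall j, (j<n)%nat -> 0 < x j) /\ (forall i, (i<m)%nat -> 0 < w i) /\
  (forall i, (i<m)%nat -> rsum n (fun j => a i j * x j) + w i = b i).
Definition dfeas m n (a : nat -> nat -> R) (c y s : nat -> R) :=
  (forall i, (i<m)%nat -> 0 < y i) /\ (forall j, (j<n)%nat -> 0 < s j) /\
  (forall j, (j<n)%nat -> - rsum m (fun i => a i j * y i) + s j = c j).
Definition rcp m n a b c mu x w y s :=
  pfeas m n a b x w /\ dfeas m n a c y s /\
  (forall i, (i<m)%nat -> w i * y i = mu) /\ (forall j, (j<n)%nat -> x j * s j = mu).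
Definition pval m n (c : nat -> R) mu (x w : nat -> R) :=
  rsum n (fun j => c j * x j) - mu * (rsum n (fun j => ln (x j)) + rsum m (fun i => ln (w i))).
Definition dval m n (b : nat -> R) mu (y s : nat -> R) :=
  - rsum m (fun i => b i * y i) + mu * (rsum n (fun j => ln (s j)) + rsum m (fun i => ln (y i))).

Lemma dot_dual m n a c y s z :
  (forall j, (j<n)%nat -> - rsum m (fun i => a i j * y i) + s j = c j) ->
  rsum n (fun j => c j * z j) =
  rsum n (fun j => s j * z j) - rsum m (fun i => y i * rsum n (fun j => a i j * z j)).
Proof.
  intros H.
  rewrite (rsum_ext n (fun j => c j * z j)
             (fun j => s j * z j - rsum m (fun i => a i j * y i * z j))).
  2: { intros j Hj. rewrite <- H by auto. rewrite rsum_scal_r. ring. }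
  rewrite rsum_minus, rsum_swap. f_equal. apply rsum_ext. intros i Hi.
  rewrite <- rsum_scal. apply rsum_ext. intros. ring.
Qed.

Lemma primal_gap m n a b c mu x w y s x' w' :
  rcp m n a b c mu x w y s -> pfeas m n a b x' w' ->
  pval m n c mu x' w' - pval m n c mu x w =
  mu * (rsum n (fun j => phi (x' j / x j)) + rsum m (fun i => phi (w' i / w i))).
Proof.
  intros [[Hx [Hw Hp]] [[Hy [Hs Hd]] [Hwy Hxs]]] [Hx' [Hw' Hp']].
  assert (E1 : rsum n (fun j => c j * x' j) - rsum n (fun j => c j * x j) =
               mu * rsum n (fun j => x' j / x j - 1) + mu * rsum m (fun i => w' i / w i - 1)).
  { rewrite <- rsum_minus.
    rewrite (rsum_ext n _ (fun j => c j * (x' j - x j))) by (intros; ring).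
    rewrite (dot_dual m n a c y s) by auto.
    rewrite (rsum_ext m (fun i => y i * rsum n (fun j => a i j * (x' j - x j)))
                        (fun i => - (mu * (w' i / w i - 1)))).
    2: { intros i Hi.
         rewrite (rsum_ext n _ (fun j => a i j * x' j - a i j * x j)) by (intros; ring).
         rewrite rsum_minus.
         assert (rsum n (fun j => a i j * x' j) = b i - w' i) as -> by (rewrite <- (Hp' i Hi); ring).
         assert (rsum n (fun j => a i j * x j) = b i - w i) as -> by (rewrite <- (Hp i Hi); ring).
         rewrite <- (Hwy i Hi). specialize (Hw i Hi). field. lra. }
    rewrite (rsum_ext n (fun j => s j * (x' j - x j)) (fun j => mu * (x' j / x j - 1))).
    2: { intros j Hj. rewrite <- (Hxs j Hj). specialize (Hx j Hj). field. lra. }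
    rewrite rsum_opp, !rsum_scal. ring. }
  assert (E2 : rsum n (fun j => phi (x' j / x j)) =
               rsum n (fun j => x' j / x j - 1) - (rsum n (fun j => ln (x' j)) - rsum n (fun j => ln (x j)))).
  { rewrite <- !rsum_minus. apply rsum_ext. intros j Hj. unfold phi.
    rewrite ln_div by auto. ring. }
  assert (E3 : rsum m (fun i => phi (w' i / w i)) =
               rsum m (fun i => w' i / w i - 1) - (rsum m (fun i => ln (w' i)) - rsum m (fun i => ln (w i)))).
  { rewrite <- !rsum_minus. apply rsum_ext. intros i Hi. unfold phi.
    rewrite ln_div by auto. ring. }
  unfold pval. rewrite E2, E3.
  assert (rsum n (fun j => c j * x' j) = rsum n (fun j => c j * x j) +
     (mu * rsum n (fun j => x' j / x j - 1) + mu * rsum m (fun i => w' i / w i - 1))) as -> by lra.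
  ring.
Qed.

Lemma rcp_swap m n a b c mu x w y s :
  rcp m n a b c mu x w y s -> rcp n m (fun j i => - a i j) c b mu y s x w.
Proof.
  intros [[Hx [Hw Hp]] [[Hy [Hs Hd]] [Hwy Hxs]]].
  split; [|split; [|split]].
  - split; [auto|split; [auto|]]. intros j Hj. rewrite <- (Hd j Hj).
    rewrite (rsum_ext m _ (fun i => - (a i j * y i))) by (intros; ring). rewrite rsum_opp. ring.
  - split; [auto|split; [auto|]]. intros i Hi. rewrite <- (Hp i Hi).
    rewrite (rsum_ext n _ (fun j => - (a i j * x j))) by (intros; ring). rewrite rsum_opp. ring.
  - intros j Hj. rewrite <- (Hxs j Hj). ring.
  - intros i Hi. rewrite <- (Hwy i Hi). ring.
Qed.

Lemma dfeas_swap m n a c y s :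
  dfeas m n a c y s -> pfeas n m (fun j i => - a i j) c y s.
Proof.
  intros [Hy [Hs Hd]]. split; [auto|split; [auto|]]. intros j Hj. rewrite <- (Hd j Hj).
  rewrite (rsum_ext m _ (fun i => - (a i j * y i))) by (intros; ring). rewrite rsum_opp. ring.
Qed.

Lemma dual_gap m n a b c mu x w y s y' s' :
  rcp m n a b c mu x w y s -> dfeas m n a c y' s' ->
  dval m n b mu y s - dval m n b mu y' s' =
  mu * (rsum m (fun i => phi (y' i / y i)) + rsum n (fun j => phi (s' j / s j))).
Proof.
  intros H H'. pose proof (primal_gap n m _ c b mu y s x w y' s' (rcp_swap _ _ _ _ _ _ _ _ _ _ H) (dfeas_swap _ _ _ _ _ _ H')) as G.
  rewrite <- G. unfold pval, dval. ring.
Qed.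

Lemma phi_sum_zero n m mu (x x' w w' : nat -> R) :
  (forall j, (j<n)%nat -> 0 < x j /\ 0 < x' j) -> (forall i, (i<m)%nat -> 0 < w i /\ 0 < w' i) ->
  0 < mu ->
  mu * (rsum n (fun j => phi (x' j / x j)) + rsum m (fun i => phi (w' i / w i))) <= 0 ->
  (forall j, (j<n)%nat -> x' j = x j) /\ (forall i, (i<m)%nat -> w' i = w i).
Proof.
  intros Hx Hw Hmu H.
  assert (N1 : forall j, (j<n)%nat -> 0 <= phi (x' j / x j)).
  { intros j Hj. destruct (Hx j Hj). apply phi_nonneg. apply Rdiv_lt_0_compat; auto. }
  assert (N2 : forall i, (i<m)%nat -> 0 <= phi (w' i / w i)).
  { intros i Hi. destruct (Hw i Hi). apply phi_nonneg. apply Rdiv_lt_0_compat; auto. }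
  pose proof (rsum_nonneg _ _ N1). pose proof (rsum_nonneg _ _ N2).
  assert (rsum n (fun j => phi (x' j / x j)) + rsum m (fun i => phi (w' i / w i)) <= 0).
  { apply Rmult_le_reg_l with mu; auto. lra. }
  assert (Z1 : rsum n (fun j => phi (x' j / x j)) = 0) by lra.
  assert (Z2 : rsum m (fun i => phi (w' i / w i)) = 0) by lra.
  split.
  - intros j Hj. destruct (Hx j Hj).
    pose proof (phi_zero _ (Rdiv_lt_0_compat _ _ H4 H3) (rsum_zero_inv _ _ N1 Z1 j Hj)) as E.
    apply (f_equal (fun r => r * x j)) in E. unfold Rdiv in E.
    rewrite Rmult_assoc, Rinv_l, Rmult_1_r, Rmult_1_l in E by lra. exact E.
  - intros i Hi. destruct (Hw i Hi).
    pose proof (phi_zero _ (Rdiv_lt_0_compat _ _ H4 H3) (rsum_zero_inv _ _ N2 Z2 i Hi)) as E.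
    apply (f_equal (fun r => r * w i)) in E. unfold Rdiv in E.
    rewrite Rmult_assoc, Rinv_l, Rmult_1_r, Rmult_1_l in E by lra. exact E.
Qed.

Lemma rcp_unique m n a b c mu x w y s x' w' y' s' : 0 < mu ->
  rcp m n a b c mu x w y s -> rcp m n a b c mu x' w' y' s' ->
  (forall j, (j<n)%nat -> x' j = x j) /\ (forall i, (i<m)%nat -> w' i = w i) /\
  (forall i, (i<m)%nat -> y' i = y i) /\ (forall j, (j<n)%nat -> s' j = s j).
Proof.
  intros Hmu H H'.
  pose proof (primal_gap _ _ _ _ _ _ _ _ _ _ x' w' H (proj1 H')) as G1.
  pose proof (primal_gap _ _ _ _ _ _ _ _ _ _ x w H' (proj1 H)) as G2.
  pose proof (dual_gap _ _ _ _ _ _ _ _ _ _ y' s' H (proj1 (proj2 H'))) as G3.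
  pose proof (dual_gap _ _ _ _ _ _ _ _ _ _ y s H' (proj1 (proj2 H))) as G4.
  destruct H as [[Hx [Hw _]] [[Hy [Hs _]] _]].
  destruct H' as [[Hx' [Hw' _]] [[Hy' [Hs' _]] _]].
  assert (N : forall n0 (u v : nat -> R), (forall j, (j < n0)%nat -> 0 < u j) -> (forall j, (j < n0)%nat -> 0 < v j) ->
             0 <= rsum n0 (fun j => phi (u j / v j))).
  { intros n0 u v Hu Hv. apply rsum_nonneg. intros j Hj. apply phi_nonneg. apply Rdiv_lt_0_compat; auto. }
  pose proof (N n x x' Hx Hx'). pose proof (N m w w' Hw Hw').
  pose proof (N n x' x Hx' Hx). pose proof (N m w' w Hw' Hw).
  pose proof (N m y y' Hy Hy'). pose proof (N n s s' Hs Hs').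
  pose proof (N m y' y Hy' Hy). pose proof (N n s' s Hs' Hs).
  assert (A1 : 0 <= mu * (rsum n (fun j => phi (x j / x' j)) + rsum m (fun i => phi (w i / w' i))))
    by (apply Rmult_le_pos; lra).
  assert (A2 : 0 <= mu * (rsum m (fun i => phi (y i / y' i)) + rsum n (fun j => phi (s j / s' j))))
    by (apply Rmult_le_pos; lra).
  destruct (phi_sum_zero n m mu x x' w w') as [E1 E2];
    [intros; split; auto|intros; split; auto|auto|lra|].
  destruct (phi_sum_zero m n mu y y' s s') as [E3 E4];
    [intros; split; auto|intros; split; auto|auto|lra|].
  auto.
Qed.

Lemma Rabs_le_inv x e : Rabs x <= e -> - e <= x /\ x <= e.
Proof.
  intros H. destruct (Rcase_abs x); [rewrite Rabs_left in H by lra|rewrite Rabs_right in H by lra]; lra.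
Qed.

Definition wof n (a : nat -> nat -> R) (b x : nat -> R) : nat -> R :=
  fun i => b i - rsum n (fun j => a i j * x j).
Definition gK mu a := mu - mu * ln (2 * mu / a).

Lemma g_lower mu a u : 0 < mu -> 0 < a -> 0 < u -> a * u / 2 + gK mu a <= a * u - mu * ln u.
Proof.
  intros Hmu Ha Hu. unfold gK.
  assert (E : ln u = ln (a * u / (2 * mu)) + ln (2 * mu / a)).
  { rewrite <- ln_mult. f_equal. field. split; lra.
    apply Rdiv_lt_0_compat; nra. apply Rdiv_lt_0_compat; lra. }
  pose proof (ln_le_sub1 (a * u / (2 * mu)) ltac:(apply Rdiv_lt_0_compat; nra)) as L.
  assert (mu * ln (a * u / (2 * mu)) <= mu * (a * u / (2 * mu) - 1)) by (apply Rmult_le_compat_l; lra).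
  assert (mu * (a * u / (2 * mu) - 1) = a * u / 2 - mu) by (field; lra).
  rewrite E. lra.
Qed.

Lemma g_bounds mu a u C : 0 < mu -> 0 < a -> 0 < u -> a * u - mu * ln u <= C ->
  exp (- C / mu) < u /\ u <= 2 * (C - gK mu a) / a.
Proof.
  intros Hmu Ha Hu H. split.
  - assert (- C / mu < ln u).
    { apply Rmult_lt_reg_l with mu; auto. replace (mu * (- C / mu)) with (- C) by (field; lra). nra. }
    rewrite <- (exp_ln u) by auto. apply exp_increasing. auto.
  - pose proof (g_lower mu a u Hmu Ha Hu).
    apply Rmult_le_reg_l with (a / 2). apply Rdiv_lt_0_compat; lra.
    replace (a / 2 * (2 * (C - gK mu a) / a)) with (C - gK mu a) by (field; lra). lra.
Qed.

Lemma exists_eta m (P : nat -> R -> Prop) :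
  (forall i, (i < m)%nat -> exists e, 0 < e /\ forall h, Rabs h <= e -> P i h) ->
  exists e, 0 < e /\ forall h, Rabs h <= e -> forall i, (i < m)%nat -> P i h.
Proof.
  induction m as [|m IH]; intros H.
  - exists 1. split; [lra|]. intros. lia.
  - destruct IH as [e1 [He1 H1]]. { intros i Hi. apply H. lia. }
    destruct (H m (Nat.lt_succ_diag_r m)) as [e2 [He2 H2]].
    exists (Rmin e1 e2). split; [apply Rmin_pos; auto|]. intros h Hh i Hi.
    pose proof (Rmin_l e1 e2). pose proof (Rmin_r e1 e2).
    destruct (Nat.eq_dec i m) as [->|]; [apply H2; lra|apply H1; [lra|lia]].
Qed.

Lemma ContAt_wof n a b i x : ContAt n (fun y => wof n a b y i) x.
Proof.
  unfold wof. apply ContAt_minus. apply ContAt_const.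
  apply ContAt_rsum. intros j Hj. apply ContAt_scal. apply ContAt_proj. auto.
Qed.

Lemma fobj_id m n a b c mu y0 s0 x : dfeas m n a c y0 s0 ->
  pval m n c mu x (wof n a b x) =
  rsum n (fun j => s0 j * x j - mu * ln (x j)) +
  rsum m (fun i => y0 i * wof n a b x i - mu * ln (wof n a b x i)) - rsum m (fun i => y0 i * b i).
Proof.
  intros [_ [_ Hd]]. unfold pval. rewrite (dot_dual m n a c y0 s0 x Hd).
  rewrite (rsum_ext m (fun i => y0 i * rsum n (fun j => a i j * x j))
                      (fun i => y0 i * b i - y0 i * wof n a b x i)) by (intros; unfold wof; ring).
  rewrite !rsum_minus, !rsum_scal. ring.
Qed.

Lemma level_bounds m n a b c mu y0 s0 x D :
  0 < mu -> dfeas m n a c y0 s0 ->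
  (forall j, (j<n)%nat -> 0 < x j) -> (forall i, (i<m)%nat -> 0 < wof n a b x i) ->
  pval m n c mu x (wof n a b x) <=
    D + (rsum n (fun j => gK mu (s0 j)) + rsum m (fun i => gK mu (y0 i)) - rsum m (fun i => y0 i * b i)) ->
  (forall j, (j<n)%nat -> exp (- (D + gK mu (s0 j)) / mu) < x j /\ x j <= 2 * D / s0 j) /\
  (forall i, (i<m)%nat -> exp (- (D + gK mu (y0 i)) / mu) < wof n a b x i /\ wof n a b x i <= 2 * D / y0 i).
Proof.
  intros Hmu Hdf Hx Hw H. rewrite (fobj_id m n a b c mu y0 s0 x Hdf) in H.
  destruct Hdf as [Hy0 [Hs0 _]].
  set (T := fun j => s0 j * x j - mu * ln (x j) - gK mu (s0 j)).
  set (U := fun i => y0 i * wof n a b x i - mu * ln (wof n a b x i) - gK mu (y0 i)).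
  assert (HT : forall j, (j<n)%nat -> 0 <= T j).
  { intros j Hj. unfold T. pose proof (g_lower mu (s0 j) (x j) Hmu (Hs0 j Hj) (Hx j Hj)).
    assert (0 <= s0 j * x j / 2). { pose proof (Hs0 j Hj); pose proof (Hx j Hj). apply Rmult_le_pos; [nra|lra]. }
    lra. }
  assert (HU : forall i, (i<m)%nat -> 0 <= U i).
  { intros i Hi. unfold U. pose proof (g_lower mu (y0 i) (wof n a b x i) Hmu (Hy0 i Hi) (Hw i Hi)).
    assert (0 <= y0 i * wof n a b x i / 2). { pose proof (Hy0 i Hi); pose proof (Hw i Hi). apply Rmult_le_pos; [nra|lra]. }
    lra. }
  assert (ST : rsum n T = rsum n (fun j => s0 j * x j - mu * ln (x j)) - rsum n (fun j => gK mu (s0 j)))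
    by (unfold T; rewrite <- rsum_minus; reflexivity).
  assert (SU : rsum m U = rsum m (fun i => y0 i * wof n a b x i - mu * ln (wof n a b x i)) - rsum m (fun i => gK mu (y0 i)))
    by (unfold U; rewrite <- rsum_minus; reflexivity).
  assert (Hsum : rsum n T + rsum m U <= D). { rewrite ST, SU. lra. }
  pose proof (rsum_nonneg n T HT). pose proof (rsum_nonneg m U HU).
  split.
  - intros j Hj. pose proof (rsum_nonneg_le n T j HT Hj).
    destruct (g_bounds mu (s0 j) (x j) (D + gK mu (s0 j)) Hmu (Hs0 j Hj) (Hx j Hj)) as [L1 L2].
    { assert (TD : T j <= D) by lra. unfold T in TD. lra. }
    split; auto. replace (D + gK mu (s0 j) - gK mu (s0 j)) with D in L2 by ring. exact L2.
  - intros i Hi. pose proof (rsum_nonneg_le m U i HU Hi).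
    destruct (g_bounds mu (y0 i) (wof n a b x i) (D + gK mu (y0 i)) Hmu (Hy0 i Hi) (Hw i Hi)) as [L1 L2].
    { assert (TD : U i <= D) by lra. unfold U in TD. lra. }
    split; auto. replace (D + gK mu (y0 i) - gK mu (y0 i)) with D in L2 by ring. exact L2.
Qed.

Definition xpert (xs : nat -> R) k h : nat -> R := fun j => xs j + (if Nat.eqb j k then h else 0).

Lemma wof_xpert n a b xs k h i : (k < n)%nat ->
  wof n a b (xpert xs k h) i = wof n a b xs i - a i k * h.
Proof.
  intros Hk. unfold wof, xpert.
  rewrite (rsum_ext n _ (fun j => a i j * xs j + (if Nat.eqb j k then a i k * h else 0))).
  2: { intros j Hj. destruct (Nat.eqb_spec j k); [subst; ring|ring]. }
  rewrite rsum_plus, rsum_delta by auto. ring.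
Qed.

Lemma rsum_xpert n (f : nat -> R -> R) xs k h : (k < n)%nat ->
  rsum n (fun j => f j (xpert xs k h j)) = rsum n (fun j => f j (xs j)) + (f k (xs k + h) - f k (xs k)).
Proof.
  intros Hk. unfold xpert.
  rewrite (rsum_ext n _ (fun j => f j (xs j) + (if Nat.eqb j k then f k (xs k + h) - f k (xs k) else 0))).
  2: { intros j Hj. destruct (Nat.eqb_spec j k); [subst; ring|rewrite Rplus_0_r; ring]. }
  rewrite rsum_plus, rsum_delta by auto. ring.
Qed.

Lemma stationarity m n a b c mu xs (lbx ubx lbw ubw : nat -> R) k :
  0 < mu -> (k < n)%nat ->
  (forall j, (j<n)%nat -> 0 < lbx j) -> (forall i, (i<m)%nat -> 0 < lbw i) ->
  (forall j, (j<n)%nat -> lbx j < xs j <= ubx j) ->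
  (forall i, (i<m)%nat -> lbw i < wof n a b xs i <= ubw i) ->
  (forall x, ((forall j, (j<n)%nat -> lbx j / 2 <= x j <= ubx j + 1) /\
              (forall i, (i<m)%nat -> lbw i / 2 <= wof n a b x i <= ubw i + 1)) ->
     pval m n c mu xs (wof n a b xs) <= pval m n c mu x (wof n a b x)) ->
  c k - mu / xs k + mu * rsum m (fun i => a i k / wof n a b xs i) = 0.
Proof.
  intros Hmu Hk Hlbx Hlbw Hxs Hws Hmin.
  set (ws := wof n a b xs) in *.
  assert (Hxk := Hxs k Hk). assert (Hlk := Hlbx k Hk).
  assert (Hwpos : forall i, (i<m)%nat -> 0 < ws i).
  { intros i Hi. pose proof (Hws i Hi). pose proof (Hlbw i Hi). lra. }
  destruct (exists_eta m (fun i h => Rabs (a i k * h) <= lbw i / 2 /\ Rabs (a i k * h) <= 1)) as [e1 [He1 H1]].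
  { intros i Hi. exists (Rmin (lbw i / 2) 1 / (Rabs (a i k) + 1)). split.
    { apply Rdiv_lt_0_compat. apply Rmin_pos; [pose proof (Hlbw i Hi); lra|lra].
      pose proof (Rabs_pos (a i k)); lra. }
    intros h Hh. rewrite Rabs_mult.
    assert (Rabs (a i k) * Rabs h <= Rmin (lbw i / 2) 1).
    { apply Rle_trans with ((Rabs (a i k) + 1) * Rabs h).
      { pose proof (Rabs_pos h). nra. }
      apply Rmult_le_compat_l with (r := Rabs (a i k) + 1) in Hh; [|pose proof (Rabs_pos (a i k)); lra].
      replace ((Rabs (a i k) + 1) * (Rmin (lbw i / 2) 1 / (Rabs (a i k) + 1))) with (Rmin (lbw i / 2) 1) in Hh
        by (field; pose proof (Rabs_pos (a i k)); lra). exact Hh. }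
    pose proof (Rmin_l (lbw i / 2) 1). pose proof (Rmin_r (lbw i / 2) 1). split; lra. }
  set (eta := Rmin e1 (Rmin (lbx k / 2) 1)).
  assert (Heta : 0 < eta) by (apply Rmin_pos; [auto|apply Rmin_pos; lra]).
  set (R1 := rsum m (fun i => a i k / ws i)).
  set (R2 := rsum m (fun i => (a i k / ws i) * (a i k / ws i))).
  assert (HR2 : 0 <= R2) by (apply rsum_nonneg; intros; nra).
  apply (quad_zero _ (2 * mu * (/ xs k * / xs k) + 2 * mu * R2) eta Heta).
  { assert (0 <= / xs k * / xs k) by (pose proof (Rinv_0_lt_compat (xs k) ltac:(lra)); nra). nra. }
  intros h Hh. unfold eta in Hh.
  assert (He1h : Rabs h <= e1) by (pose proof (Rmin_l e1 (Rmin (lbx k / 2) 1)); lra).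
  assert (Hh2 : Rabs h <= lbx k / 2 /\ Rabs h <= 1).
  { pose proof (Rmin_r e1 (Rmin (lbx k / 2) 1)). pose proof (Rmin_l (lbx k / 2) 1).
    pose proof (Rmin_r (lbx k / 2) 1). split; lra. }
  assert (Hha := H1 h He1h).
  destruct (Rabs_le_inv h (Rabs h) (Rle_refl _)) as [hl hr].
  assert (Hbox : (forall j, (j<n)%nat -> lbx j / 2 <= xpert xs k h j <= ubx j + 1) /\
              (forall i, (i<m)%nat -> lbw i / 2 <= wof n a b (xpert xs k h) i <= ubw i + 1)).
  { split.
    - intros j Hj. unfold xpert. destruct (Nat.eqb_spec j k).
      + subst. lra.
      + pose proof (Hxs j Hj). pose proof (Hlbx j Hj). lra.
    - intros i Hi. rewrite wof_xpert by auto. fold ws. destruct (Hha i Hi) as [A B].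
      destruct (Rabs_le_inv _ _ (Rle_refl (Rabs (a i k * h)))).
      pose proof (Hws i Hi). lra. }
  pose proof (Hmin _ Hbox) as Hm.
  assert (Wx : forall i, (i<m)%nat -> wof n a b (xpert xs k h) i = ws i - a i k * h)
    by (intros; apply wof_xpert; auto).
  assert (A1 : rsum n (fun j => c j * xpert xs k h j) = rsum n (fun j => c j * xs j) + c k * h).
  { rewrite (rsum_xpert n (fun j u => c j * u)) by auto. ring. }
  assert (A2 : rsum n (fun j => ln (xpert xs k h j)) = rsum n (fun j => ln (xs j)) + (ln (xs k + h) - ln (xs k))).
  { apply (rsum_xpert n (fun _ u => ln u)). auto. }
  assert (A4 : h / xs k - 2 * (h / xs k) * (h / xs k) <= ln (xs k + h) - ln (xs k)).
  { assert (Hu : Rabs (h / xs k) <= 1/2).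
    { unfold Rdiv; rewrite Rabs_mult, Rabs_inv, (Rabs_right (xs k)) by lra.
      apply Rmult_le_reg_r with (xs k); [lra|]; rewrite Rmult_assoc, Rinv_l by lra; lra. }
    destruct (Rabs_le_inv _ _ Hu).
    assert (xs k + h = xs k * (1 + h / xs k)) as -> by (field; lra).
    rewrite ln_mult by lra.
    pose proof (ln1p_lower (h / xs k) ltac:(lra)). lra. }
  assert (A3 : rsum m (fun i => ln (ws i)) - h * R1 - 2 * (h * h) * R2 <=
               rsum m (fun i => ln (wof n a b (xpert xs k h) i))).
  { unfold R1, R2. rewrite <- !rsum_scal, <- !rsum_minus.
    apply rsum_le. intros i Hi. rewrite Wx by auto.
    destruct (Hha i Hi) as [A B].
    assert (Hu : Rabs (- (a i k * h) / ws i) <= 1/2).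
    { unfold Rdiv; rewrite Rabs_mult, Rabs_inv, Rabs_Ropp, (Rabs_right (ws i)) by (pose proof (Hwpos i Hi); lra).
      apply Rmult_le_reg_r with (ws i); [auto|]. rewrite Rmult_assoc, Rinv_l by (pose proof (Hwpos i Hi); lra).
      pose proof (Hws i Hi). lra. }
    destruct (Rabs_le_inv _ _ Hu).
    assert (ws i - a i k * h = ws i * (1 + - (a i k * h) / ws i)) as -> by (field; pose proof (Hwpos i Hi); lra).
    rewrite ln_mult by (pose proof (Hwpos i Hi); lra).
    pose proof (ln1p_lower (- (a i k * h) / ws i) ltac:(lra)).
    assert (- (a i k * h) / ws i - 2 * (- (a i k * h) / ws i) * (- (a i k * h) / ws i) =
            h * (a i k / ws i) * -1 + (- (2 * (h * h) * (a i k / ws i * (a i k / ws i))))) as E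
      by (field; pose proof (Hwpos i Hi); lra).
    lra. }
  unfold pval in Hm. rewrite A1, A2 in Hm. fold ws in Hm.
  set (Lx := ln (xs k + h) - ln (xs k)) in *.
  set (Lw := rsum m (fun i => ln (wof n a b (xpert xs k h) i))) in *.
  set (Lw0 := rsum m (fun i => ln (ws i))) in *.
  assert (mu * (h / xs k - 2 * (h / xs k) * (h / xs k) + (Lw0 - h * R1 - 2 * (h * h) * R2)) <= mu * (Lx + Lw))
    by (apply Rmult_le_compat_l; lra).
  assert (h * (c k - mu / xs k + mu * R1) + h * h * (2 * mu * (/ xs k * / xs k) + 2 * mu * R2) =
          c k * h - mu * (h / xs k - 2 * (h / xs k) * (h / xs k) + (- h * R1 - 2 * (h * h) * R2))) as ->
    by (field; lra).
  lra.
Qed.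

Lemma real_exists m n a b c mu : 0 < mu ->
  (exists x0 w0, pfeas m n a b x0 w0) -> (exists y0 s0, dfeas m n a c y0 s0) ->
  exists x w y s, rcp m n a b c mu x w y s.
Proof.
  intros Hmu [x0 [w0 Hpf]] [y0 [s0 Hdf]].
  set (Kc := rsum n (fun j => gK mu (s0 j)) + rsum m (fun i => gK mu (y0 i)) - rsum m (fun i => y0 i * b i)).
  set (D := pval m n c mu x0 (wof n a b x0) - Kc).
  set (lbx := fun j => exp (- (D + gK mu (s0 j)) / mu)).
  set (ubx := fun j => 2 * D / s0 j).
  set (lbw := fun i => exp (- (D + gK mu (y0 i)) / mu)).
  set (ubw := fun i => 2 * D / y0 i).
  assert (Hlbx : forall j, 0 < lbx j) by (intros; apply exp_pos).
  assert (Hlbw : forall i, 0 < lbw i) by (intros; apply exp_pos).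
  destruct Hpf as [Hx0 [Hw0 Hp0]].
  assert (Ew0 : forall i, (i<m)%nat -> wof n a b x0 i = w0 i).
  { intros i Hi. unfold wof. rewrite <- (Hp0 i Hi). ring. }
  assert (Wext : forall x y, (forall j, (j<n)%nat -> x j = y j) -> forall i, wof n a b x i = wof n a b y i).
  { intros x y E i. unfold wof. f_equal. apply rsum_ext. intros j Hj. rewrite E; auto. }
  assert (LB : forall x, (forall j, (j<n)%nat -> 0 < x j) -> (forall i, (i<m)%nat -> 0 < wof n a b x i) ->
            pval m n c mu x (wof n a b x) <= pval m n c mu x0 (wof n a b x0) ->
            (forall j, (j<n)%nat -> lbx j < x j <= ubx j) /\ (forall i, (i<m)%nat -> lbw i < wof n a b x i <= ubw i)).
  { intros x Hx Hw H. apply (level_bounds m n a b c mu y0 s0 x D Hmu Hdf Hx Hw). unfold D, Kc in *. lra. }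
  destruct (MC.evt_set n m (fun j => lbx j / 2) (fun j => ubx j + 1) (fun i => lbw i / 2) (fun i => ubw i + 1)
              (fun i x => wof n a b x i) (fun x => pval m n c mu x (wof n a b x))) as [xs [Sxs Hmin]].
  - intros i x y E. apply Wext. auto.
  - intros x y E. unfold pval. rewrite (rsum_ext n (fun j => c j * x j) (fun j => c j * y j)) by (intros j Hj; rewrite E; auto).
    rewrite (rsum_ext n (fun j => ln (x j)) (fun j => ln (y j))) by (intros j Hj; rewrite E; auto).
    rewrite (rsum_ext m (fun i => ln (wof n a b x i)) (fun i => ln (wof n a b y i))) by (intros i Hi; rewrite (Wext x y E); auto).
    reflexivity.
  - intros i x Hi. apply ContAt_wof.
  - intros x [Hb Hc]. unfold pval. apply ContAt_minus.
    + apply ContAt_rsum. intros j Hj. apply ContAt_scal. apply ContAt_proj. auto.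
    + apply ContAt_scal. apply ContAt_plus.
      * apply ContAt_rsum. intros j Hj. apply ContAt_ln. apply ContAt_proj. auto.
        destruct (Hb j Hj). pose proof (Hlbx j). lra.
      * apply ContAt_rsum. intros i Hi. apply ContAt_ln. apply ContAt_wof.
        destruct (Hc i Hi). pose proof (Hlbw i). lra.
  - exists x0. destruct (LB x0) as [B1 B2]; auto.
    { intros i Hi. rewrite Ew0; auto. } { lra. }
    split.
    + intros j Hj. destruct (B1 j Hj). pose proof (Hlbx j). lra.
    + intros i Hi. destruct (B2 i Hi). pose proof (Hlbw i). lra.
  - destruct Sxs as [Sb Sc].
    assert (Hxs : forall j, (j<n)%nat -> 0 < xs j).
    { intros j Hj. destruct (Sb j Hj). pose proof (Hlbx j). lra. }
    assert (Hws : forall i, (i<m)%nat -> 0 < wof n a b xs i).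
    { intros i Hi. destruct (Sc i Hi). pose proof (Hlbw i). lra. }
    assert (Hle : pval m n c mu xs (wof n a b xs) <= pval m n c mu x0 (wof n a b x0)).
    { apply Hmin. split.
      + intros j Hj. destruct (LB x0) as [B1 B2]; auto.
        { intros i Hi. rewrite Ew0; auto. } { lra. }
        destruct (B1 j Hj). pose proof (Hlbx j). lra.
      + intros i Hi. destruct (LB x0) as [B1 B2]; auto.
        { intros i' Hi'. rewrite Ew0; auto. } { lra. }
        destruct (B2 i Hi). pose proof (Hlbw i). lra. }
    destruct (LB xs Hxs Hws Hle) as [Bx Bw].
    assert (Stat : forall k, (k<n)%nat -> c k - mu / xs k + mu * rsum m (fun i => a i k / wof n a b xs i) = 0).
    { intros k Hk. apply (stationarity m n a b c mu xs lbx ubx lbw ubw k Hmu Hk); auto.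
    }
    exists xs, (wof n a b xs), (fun i => mu / wof n a b xs i), (fun j => mu / xs j).
    split; [|split; [|split]].
    + split; [auto|split; [auto|]]. intros i Hi. unfold wof. ring.
    + split; [|split].
      * intros i Hi. apply Rdiv_lt_0_compat; auto.
      * intros j Hj. apply Rdiv_lt_0_compat; auto.
      * intros j Hj. specialize (Stat j Hj).
        rewrite (rsum_ext m _ (fun i => mu * (a i j / wof n a b xs i))) by
          (intros i Hi; field; pose proof (Hws i Hi); lra).
        rewrite rsum_scal. lra.
    + intros i Hi. field. pose proof (Hws i Hi). lra.
    + intros j Hj. field. pose proof (Hxs j Hj). lra.
Qed.

Definition Def (P : (nat -> R) -> Prop) := exists phi, forall e, sat e phi <-> P e.

Lemma Def_iff P Q : Def P -> (forall e, P e <-> Q e) -> Def Q.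
Proof. intros [p Hp] H. exists p. intros e. rewrite Hp. apply H. Qed.

Lemma Def_and P Q : Def P -> Def Q -> Def (fun e => P e /\ Q e).
Proof. intros [p Hp] [q Hq]. exists (FAnd p q). intros e. simpl. rewrite Hp, Hq. tauto. Qed.

Lemma Def_not P : Def P -> Def (fun e => ~ P e).
Proof. intros [p Hp]. exists (FNot p). intros e. simpl. rewrite Hp. tauto. Qed.

Lemma Def_or P Q : Def P -> Def Q -> Def (fun e => P e \/ Q e).
Proof.
  intros HP HQ. apply (Def_iff (fun e => ~ (~ P e /\ ~ Q e))).
  - apply Def_not. apply Def_and; apply Def_not; auto.
  - intros e. split; [|tauto]. intros H. apply NNPP. tauto.
Qed.

Lemma Def_ex k P : Def P -> Def (fun e => exists a, P (upd e k a)).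
Proof. intros [p Hp]. exists (FEx k p). intros e. simpl. split; intros [a Ha]; exists a; apply Hp; auto. Qed.

Lemma Def_eq u v : Def (fun e => teval e u = teval e v).
Proof. exists (FEq u v). intros e. reflexivity. Qed.

Lemma Def_lt u v : Def (fun e => teval e u < teval e v).
Proof. exists (FLt u v). intros e. reflexivity. Qed.

Lemma Def_true : Def (fun _ => True).
Proof. exists (FEq (TCst 0) (TCst 0)). intros e. simpl. tauto. Qed.

Lemma Def_forall_lt m (P : nat -> (nat -> R) -> Prop) :
  (forall i, (i < m)%nat -> Def (P i)) -> Def (fun e => forall i, (i < m)%nat -> P i e).
Proof.
  induction m as [|m IH]; intros H.
  - apply (Def_iff (fun _ => True)); [apply Def_true|]. intros e. split; [intros _ i Hi; lia|auto].
  - apply (Def_iff (fun e => (forall i, (i < m)%nat -> P i e) /\ P m e)).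
    + apply Def_and; [apply IH; intros; apply H; lia|apply H; lia].
    + intros e. split.
      * intros [A B] i Hi. destruct (Nat.eq_dec i m) as [->|]; [auto|apply A; lia].
      * intros A. split; [intros; apply A; lia|apply A; lia].
Qed.

Fixpoint trn (s : nat -> nat) (u : term) : term :=
  match u with
  | TVar n => TVar (s n)
  | TCst r => TCst r
  | TAdd a b => TAdd (trn s a) (trn s b)
  | TMul a b => TMul (trn s a) (trn s b)
  | TOpp a => TOpp (trn s a)
  | TPow r a => TPow r (trn s a)
  end.

Fixpoint frn (s : nat -> nat) (p : formula) : formula :=
  match p with
  | FEq u v => FEq (trn s u) (trn s v)
  | FLt u v => FLt (trn s u) (trn s v)
  | FNot q => FNot (frn s q)
  | FAnd q r => FAnd (frn s q) (frn s r)
  | FEx n q => FEx (s n) (frn s q)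
  end.

Lemma teval_rn s e u : teval e (trn s u) = teval (fun k => e (s k)) u.
Proof. induction u; simpl; congruence. Qed.

Lemma sat_rn s p : (forall a b, s a = s b -> a = b) ->
  forall e, sat e (frn s p) <-> sat (fun k => e (s k)) p.
Proof.
  intros Hinj. induction p; intros e; simpl; try rewrite !teval_rn; try tauto.
  - rewrite IHp. tauto.
  - rewrite IHp1, IHp2. tauto.
  - split; intros [a Ha]; exists a.
    + rewrite IHp in Ha.
      replace (upd (fun k => e (s k)) n a) with (fun k => upd e (s n) a (s k)); auto.
      apply functional_extensionality. intros k. unfold upd.
      destruct (Nat.eqb_spec (s k) (s n)), (Nat.eqb_spec k n); subst; try congruence.
      apply Hinj in e0. contradiction.
    + rewrite IHp.
      replace (fun k => upd e (s n) a (s k)) with (upd (fun k => e (s k)) n a); auto.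
      apply functional_extensionality. intros k. unfold upd.
      destruct (Nat.eqb_spec (s k) (s n)), (Nat.eqb_spec k n); subst; try congruence.
      apply Hinj in e0. contradiction.
Qed.

Lemma Def_graph f k l : definable_fun f -> k <> l -> Def (fun e => e l = f (e k)).
Proof.
  intros [p Hp] Hkl.
  set (s := fun x => if Nat.eqb x 0 then k else if Nat.eqb x 1 then l else (x + k + l + 2)%nat).
  assert (Hinj : forall a b, s a = s b -> a = b).
  { intros a b. unfold s.
    destruct (Nat.eqb_spec a 0), (Nat.eqb_spec b 0), (Nat.eqb_spec a 1), (Nat.eqb_spec b 1); lia. }
  exists (frn s p). intros e. rewrite (sat_rn s p Hinj e), Hp. unfold s. simpl. tauto.
Qed.

Definition updl (e : nat -> R) (L : list nat) (g : nat -> R) : nat -> R :=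
  fun k => if in_dec Nat.eq_dec k L then g k else e k.

Lemma Def_exl L P : Def P -> Def (fun e => exists g, P (updl e L g)).
Proof.
  induction L as [|k L IH]; intros H.
  - apply (Def_iff P); [exact H|]. intros e.
    replace (fun g => P (updl e [] g)) with (fun _ : nat -> R => P e).
    + split; [intros; exists (fun _ => 0); auto|intros [_ ?]; auto].
    + apply functional_extensionality. intros g. f_equal.
  - apply (Def_iff (fun e => exists a, (fun e' => exists g, P (updl e' L g)) (upd e k a))).
    + apply (Def_ex k (fun e' => exists g, P (updl e' L g))). apply IH. auto.
    + intros e. split.
      * intros [a [g Hg]].
        exists (fun x => if in_dec Nat.eq_dec x L then g x else a).
        replace (updl e (k :: L) (fun x => if in_dec Nat.eq_dec x L then g x else a))
          with (updl (upd e k a) L g); auto.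
        apply functional_extensionality. intros x. unfold updl, upd.
        destruct (in_dec Nat.eq_dec x (k :: L)) as [Hin|Hnin], (in_dec Nat.eq_dec x L) as [HL|HnL]; auto.
        -- destruct Hin as [->|]; [rewrite Nat.eqb_refl; auto|contradiction].
        -- exfalso. apply Hnin. right. auto.
        -- destruct (Nat.eqb_spec x k); subst; auto. exfalso. apply Hnin. left. auto.
      * intros [g Hg]. exists (g k). exists g.
        replace (updl (upd e k (g k)) L g) with (updl e (k :: L) g); auto.
        apply functional_extensionality. intros x. unfold updl, upd.
        destruct (in_dec Nat.eq_dec x (k :: L)) as [Hin|Hnin], (in_dec Nat.eq_dec x L) as [HL|HnL]; auto.
        -- destruct Hin as [->|]; [rewrite Nat.eqb_refl; auto|contradiction].
        -- exfalso. apply Hnin. right. auto.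
        -- destruct (Nat.eqb_spec x k); subst; auto. exfalso. apply Hnin. left. auto.
Qed.

Definition tsum n (f : nat -> term) : term := fold_right TAdd (TCst 0) (map f (seq 0 n)).

Lemma teval_tsum e n f : teval e (tsum n f) = rsum n (fun j => teval e (f j)).
Proof.
  unfold tsum, rsum. generalize (seq 0 n). intros l. induction l; simpl; congruence.
Qed.

Lemma rcp_ext m n a a' b b' c c' mu x x' w w' y y' s s' :
  (forall i j, (i<m)%nat -> (j<n)%nat -> a i j = a' i j) ->
  (forall i, (i<m)%nat -> b i = b' i) -> (forall j, (j<n)%nat -> c j = c' j) ->
  (forall j, (j<n)%nat -> x j = x' j) -> (forall i, (i<m)%nat -> w i = w' i) ->
  (forall i, (i<m)%nat -> y i = y' i) -> (forall j, (j<n)%nat -> s j = s' j) ->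
  rcp m n a b c mu x w y s -> rcp m n a' b' c' mu x' w' y' s'.
Proof.
  intros Ea Eb Ec Ex Ew Ey Es [[Hx [Hw Hp]] [[Hy [Hs Hd]] [Hwy Hxs]]].
  split; [|split; [|split]].
  - split; [intros j Hj; rewrite <- Ex; auto|split; [intros i Hi; rewrite <- Ew; auto|]].
    intros i Hi. rewrite <- Eb, <- Ew by auto. rewrite <- (Hp i Hi). f_equal.
    apply rsum_ext. intros j Hj. rewrite Ea, Ex by auto. reflexivity.
  - split; [intros i Hi; rewrite <- Ey; auto|split; [intros j Hj; rewrite <- Es; auto|]].
    intros j Hj. rewrite <- Ec, <- Es by auto. rewrite <- (Hd j Hj). f_equal. f_equal.
    apply rsum_ext. intros i Hi. rewrite Ea, Ey by auto. reflexivity.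
  - intros i Hi. rewrite <- Ew, <- Ey by auto. auto.
  - intros j Hj. rewrite <- Ex, <- Es by auto. auto.
Qed.

Lemma Def_rcp m n (ca : nat -> nat -> nat) (cb cc : nat -> nat) (cmu : nat) (cx cw cy cs : nat -> nat) :
  Def (fun e => rcp m n (fun i j => e (ca i j)) (fun i => e (cb i)) (fun j => e (cc j)) (e cmu)
                  (fun j => e (cx j)) (fun i => e (cw i)) (fun i => e (cy i)) (fun j => e (cs j))).
Proof.
  unfold rcp, pfeas, dfeas.
  repeat apply Def_and.
  - apply Def_forall_lt. intros j Hj. apply (Def_lt (TCst 0) (TVar (cx j))).
  - apply Def_forall_lt. intros i Hi. apply (Def_lt (TCst 0) (TVar (cw i))).
  - apply Def_forall_lt. intros i Hi.
    apply (Def_iff _ _ (Def_eq (TAdd (tsum n (fun j => TMul (TVar (ca i j)) (TVar (cx j)))) (TVar (cw i))) (TVar (cb i)))).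
    intros e. simpl. rewrite teval_tsum. simpl. tauto.
  - apply Def_forall_lt. intros i Hi. apply (Def_lt (TCst 0) (TVar (cy i))).
  - apply Def_forall_lt. intros j Hj. apply (Def_lt (TCst 0) (TVar (cs j))).
  - apply Def_forall_lt. intros j Hj.
    apply (Def_iff _ _ (Def_eq (TAdd (TOpp (tsum m (fun i => TMul (TVar (ca i j)) (TVar (cy i))))) (TVar (cs j))) (TVar (cc j)))).
    intros e. simpl. rewrite teval_tsum. simpl. tauto.
  - apply Def_forall_lt. intros i Hi. apply (Def_eq (TMul (TVar (cw i)) (TVar (cy i))) (TVar cmu)).
  - apply Def_forall_lt. intros j Hj. apply (Def_eq (TMul (TVar (cx j)) (TVar (cs j))) (TVar cmu)).
Qed.

Definition cX (n m j : nat) : nat := (2 + j)%nat.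
Definition cW (n m i : nat) : nat := (2 + n + i)%nat.
Definition cY (n m i : nat) : nat := (2 + n + m + i)%nat.
Definition cS (n m j : nat) : nat := (2 + n + 2 * m + j)%nat.
Definition cB (n m i : nat) : nat := (2 + 2 * n + 2 * m + i)%nat.
Definition cC (n m j : nat) : nat := (2 + 2 * n + 3 * m + j)%nat.
Definition cMU (n m : nat) : nat := (2 + 3 * n + 3 * m)%nat.
Definition cA (n m i j : nat) : nat := (3 + 3 * n + 3 * m + i * n + j)%nat.
Definition Lay (n m : nat) : list nat := seq 2 (1 + 3 * n + 3 * m + m * n).

Definition tgt n m (x w y s bv cv : nat -> R) (muv : R) (av : nat -> nat -> R) (k : nat) : R :=
  if Nat.ltb k (2 + n) then x (k - 2)%nat
  else if Nat.ltb k (2 + n + m) then w (k - (2 + n))%nat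
  else if Nat.ltb k (2 + n + 2 * m) then y (k - (2 + n + m))%nat
  else if Nat.ltb k (2 + 2 * n + 2 * m) then s (k - (2 + n + 2 * m))%nat
  else if Nat.ltb k (2 + 2 * n + 3 * m) then bv (k - (2 + 2 * n + 2 * m))%nat
  else if Nat.ltb k (2 + 3 * n + 3 * m) then cv (k - (2 + 2 * n + 3 * m))%nat
  else if Nat.eqb k (2 + 3 * n + 3 * m) then muv
  else av ((k - (3 + 3 * n + 3 * m)) / n)%nat ((k - (3 + 3 * n + 3 * m)) mod n)%nat.

Ltac tgt_solve :=
  unfold tgt, cX, cW, cY, cS, cB, cC, cMU;
  repeat match goal with
  | |- context [Nat.ltb ?a ?b] => destruct (Nat.ltb_spec a b); try lia
  | |- context [Nat.eqb ?a ?b] => destruct (Nat.eqb_spec a b); try lia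
  end; first [reflexivity | f_equal; lia].

Section Tgt.
End Tgt.

Lemma tgt_X n m x w y s bv cv muv av j : (j < n)%nat -> tgt n m x w y s bv cv muv av (cX n m j) = x j.
Proof. intros. tgt_solve. Qed.
Lemma tgt_W n m x w y s bv cv muv av i : (i < m)%nat -> tgt n m x w y s bv cv muv av (cW n m i) = w i.
Proof. intros. tgt_solve. Qed.
Lemma tgt_Y n m x w y s bv cv muv av i : (i < m)%nat -> tgt n m x w y s bv cv muv av (cY n m i) = y i.
Proof. intros. tgt_solve. Qed.
Lemma tgt_S n m x w y s bv cv muv av j : (j < n)%nat -> tgt n m x w y s bv cv muv av (cS n m j) = s j.
Proof. intros. tgt_solve. Qed.
Lemma tgt_B n m x w y s bv cv muv av i : (i < m)%nat -> tgt n m x w y s bv cv muv av (cB n m i) = bv i.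
Proof. intros. tgt_solve. Qed.
Lemma tgt_C n m x w y s bv cv muv av j : (j < n)%nat -> tgt n m x w y s bv cv muv av (cC n m j) = cv j.
Proof. intros. tgt_solve. Qed.
Lemma tgt_MU n m x w y s bv cv muv av : tgt n m x w y s bv cv muv av (cMU n m) = muv.
Proof. tgt_solve. Qed.
Lemma tgt_A n m x w y s bv cv muv av i j : (i < m)%nat -> (j < n)%nat ->
  tgt n m x w y s bv cv muv av (cA n m i j) = av i j.
Proof.
  intros Hi Hj. unfold tgt, cA.
  repeat match goal with
  | |- context [Nat.ltb ?a ?b] => destruct (Nat.ltb_spec a b); try lia
  | |- context [Nat.eqb ?a ?b] => destruct (Nat.eqb_spec a b); try lia
  end.
  replace (3 + 3 * n + 3 * m + i * n + j - (3 + 3 * n + 3 * m))%nat with (j + i * n)%nat by lia.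
  rewrite Nat.div_add, Nat.div_small, Nat.Div0.mod_add, Nat.mod_small by lia. reflexivity.
Qed.

Definition Qf m n (A : mat) (b c : vec) (mu : R -> R) (o : nat) (e : nat -> R) : Prop :=
  (forall i, (i<m)%nat -> forall j, (j<n)%nat -> e (cA n m i j) = A i j (e 0%nat)) /\
  (forall i, (i<m)%nat -> e (cB n m i) = b i (e 0%nat)) /\
  (forall j, (j<n)%nat -> e (cC n m j) = c j (e 0%nat)) /\
  e (cMU n m) = mu (e 0%nat) /\
  rcp m n (fun i j => e (cA n m i j)) (fun i => e (cB n m i)) (fun j => e (cC n m j)) (e (cMU n m))
      (fun j => e (cX n m j)) (fun i => e (cW n m i)) (fun i => e (cY n m i)) (fun j => e (cS n m j)) /\
  e 1%nat = e o.

Lemma Def_Qf m n A b c mu o : Kmat m n A -> Kvec m b -> Kvec n c -> inK mu -> Def (Qf m n A b c mu o).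
Proof.
  intros HA Hb Hc Hmu. unfold Qf. apply Def_and; [|apply Def_and; [|apply Def_and; [|apply Def_and; [|apply Def_and]]]].
  - apply Def_forall_lt. intros i Hi. apply Def_forall_lt. intros j Hj.
    apply Def_graph; [apply HA; auto|unfold cA; lia].
  - apply Def_forall_lt. intros i Hi. apply Def_graph; [apply Hb; auto|unfold cB; lia].
  - apply Def_forall_lt. intros j Hj. apply Def_graph; [apply Hc; auto|unfold cC; lia].
  - apply Def_graph; [auto|unfold cMU; lia].
  - apply Def_rcp.
  - apply (Def_eq (TVar 1) (TVar o)).
Qed.

Definition ocode n m (sel p : nat) : nat :=
  match sel with 0 => cX n m p | 1 => cW n m p | 2 => cY n m p | _ => cS n m p end.
Definition oval (sel p : nat) (x w y s : nat -> R) : R :=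
  match sel with 0 => x p | 1 => w p | 2 => y p | _ => s p end.
Definition obnd n m (sel : nat) : nat := match sel with 1 | 2 => m | _ => n end.

Lemma updl_in e L g k : In k L -> updl e L g k = g k.
Proof. intros H. unfold updl. destruct (in_dec Nat.eq_dec k L); tauto. Qed.
Lemma updl_nin e L g k : ~ In k L -> updl e L g k = e k.
Proof. intros H. unfold updl. destruct (in_dec Nat.eq_dec k L); tauto. Qed.

Lemma in_Lay n m k : (2 <= k < 3 + 3 * n + 3 * m + m * n)%nat -> In k (Lay n m).
Proof. intros H. unfold Lay. apply in_seq. lia. Qed.
Lemma nin_Lay n m k : (k < 2)%nat -> ~ In k (Lay n m).
Proof. intros H Hin. unfold Lay in Hin. apply in_seq in Hin. lia. Qed.

Lemma Qf_sem m n A b c mu sel p e : (p < obnd n m sel)%nat ->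
  (exists g, Qf m n A b c mu (ocode n m sel p) (updl e (Lay n m) g)) <->
  exists x w y s, rcp m n (fun i j => A i j (e 0%nat)) (fun i => b i (e 0%nat)) (fun j => c j (e 0%nat)) (mu (e 0%nat)) x w y s
                  /\ e 1%nat = oval sel p x w y s.
Proof.
  intros Hp. split.
  - intros [g [HA [Hb [Hc [Hmu [Hr Ho]]]]]].
    set (e' := updl e (Lay n m) g) in *.
    assert (E0 : e' 0%nat = e 0%nat) by (apply updl_nin, nin_Lay; lia).
    assert (E1 : e' 1%nat = e 1%nat) by (apply updl_nin, nin_Lay; lia).
    rewrite E0 in HA, Hb, Hc, Hmu. rewrite Hmu in Hr.
    exists (fun j => e' (cX n m j)), (fun i => e' (cW n m i)), (fun i => e' (cY n m i)), (fun j => e' (cS n m j)).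
    split.
    + eapply rcp_ext; [| | | | | | |exact Hr]; simpl; auto.
    + rewrite <- E1, Ho. destruct sel as [|[|[|]]]; reflexivity.
  - intros [x [w [y [s [Hr Ho]]]]].
    set (g := tgt n m x w y s (fun i => b i (e 0%nat)) (fun j => c j (e 0%nat)) (mu (e 0%nat)) (fun i j => A i j (e 0%nat))).
    exists g. set (e' := updl e (Lay n m) g).
    assert (E0 : e' 0%nat = e 0%nat) by (apply updl_nin, nin_Lay; lia).
    assert (E1 : e' 1%nat = e 1%nat) by (apply updl_nin, nin_Lay; lia).
    assert (VX : forall j, (j<n)%nat -> e' (cX n m j) = x j).
    { intros j Hj. unfold e'. rewrite updl_in by (apply in_Lay; unfold cX; lia). apply tgt_X; auto. }
    assert (VW : forall i, (i<m)%nat -> e' (cW n m i) = w i).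
    { intros i Hi. unfold e'. rewrite updl_in by (apply in_Lay; unfold cW; lia). apply tgt_W; auto. }
    assert (VY : forall i, (i<m)%nat -> e' (cY n m i) = y i).
    { intros i Hi. unfold e'. rewrite updl_in by (apply in_Lay; unfold cY; lia). apply tgt_Y; auto. }
    assert (VS : forall j, (j<n)%nat -> e' (cS n m j) = s j).
    { intros j Hj. unfold e'. rewrite updl_in by (apply in_Lay; unfold cS; lia). apply tgt_S; auto. }
    assert (VB : forall i, (i<m)%nat -> e' (cB n m i) = b i (e 0%nat)).
    { intros i Hi. unfold e'. rewrite updl_in by (apply in_Lay; unfold cB; lia). apply tgt_B; auto. }
    assert (VC : forall j, (j<n)%nat -> e' (cC n m j) = c j (e 0%nat)).
    { intros j Hj. unfold e'. rewrite updl_in by (apply in_Lay; unfold cC; lia). apply tgt_C; auto. }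
    assert (VM : e' (cMU n m) = mu (e 0%nat)).
    { unfold e'. rewrite updl_in by (apply in_Lay; unfold cMU; lia). apply tgt_MU. }
    assert (VA : forall i j, (i<m)%nat -> (j<n)%nat -> e' (cA n m i j) = A i j (e 0%nat)).
    { intros i j Hi Hj. unfold e'. rewrite updl_in by (apply in_Lay; unfold cA; nia). apply tgt_A; auto. }
    unfold Qf. rewrite E0. split; [|split; [|split; [|split; [|split]]]].
    + intros i Hi j Hj. auto.
    + auto.
    + auto.
    + auto.
    + rewrite VM. eapply rcp_ext; [| | | | | | |exact Hr]; intros; symmetry; auto.
    + rewrite E1, Ho. destruct sel as [|[|[|]]]; simpl in Hp |- *.
      * rewrite VX; auto.
      * rewrite VW; auto.
      * rewrite VY; auto.
      * rewrite VS; auto.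
Qed.

Definition rcpt m n (A : mat) (b c : vec) (mu : R -> R) (t : R) x w y s :=
  rcp m n (fun i j => A i j t) (fun i => b i t) (fun j => c j t) (mu t) x w y s.

Lemma cp_ev m n A b c mu x w y s : central_path m n A b c mu x w y s ->
  eventually (fun t => rcpt m n A b c mu t (fun j => x j t) (fun i => w i t) (fun i => y i t) (fun j => s j t)).
Proof.
  intros [_ [_ [_ [_ [Px [Pw [Py [Ps [Ep [Ed [Ewy Exs]]]]]]]]]]].
  pose proof (ev_forall n _ Px) as E1. pose proof (ev_forall m _ Pw) as E2.
  pose proof (ev_forall m _ Py) as E3. pose proof (ev_forall n _ Ps) as E4.
  pose proof (ev_forall m _ Ep) as E5. pose proof (ev_forall n _ Ed) as E6.
  pose proof (ev_forall m _ Ewy) as E7. pose proof (ev_forall n _ Exs) as E8.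
  repeat match goal with H1 : eventually _, H2 : eventually _ |- _ =>
    let Hn := fresh "E" in pose proof (ev_and _ _ H1 H2) as Hn; clear H1 H2 end.
  eapply ev_mono; [|eassumption]. simpl. intros t H. unfold rcpt, rcp, pfeas, dfeas. tauto.
Qed.

Lemma pf_ev m n A b x w : primal_feasible m n A b x w ->
  eventually (fun t => pfeas m n (fun i j => A i j t) (fun i => b i t) (fun j => x j t) (fun i => w i t)).
Proof.
  intros [_ [_ [Px [Pw Ep]]]].
  pose proof (ev_forall n _ Px) as E1. pose proof (ev_forall m _ Pw) as E2.
  pose proof (ev_forall m _ Ep) as E5.
  repeat match goal with H1 : eventually _, H2 : eventually _ |- _ =>
    let Hn := fresh "E" in pose proof (ev_and _ _ H1 H2) as Hn; clear H1 H2 end.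
  eapply ev_mono; [|eassumption]. simpl. intros t H. unfold pfeas. tauto.
Qed.

Lemma df_ev m n A c y s : dual_feasible m n A c y s ->
  eventually (fun t => dfeas m n (fun i j => A i j t) (fun j => c j t) (fun i => y i t) (fun j => s j t)).
Proof.
  intros [_ [_ [Ps [Py Ed]]]].
  pose proof (ev_forall n _ Ps) as E1. pose proof (ev_forall m _ Py) as E2.
  pose proof (ev_forall n _ Ed) as E5.
  repeat match goal with H1 : eventually _, H2 : eventually _ |- _ =>
    let Hn := fresh "E" in pose proof (ev_and _ _ H1 H2) as Hn; clear H1 H2 end.
  eapply ev_mono; [|eassumption]. simpl. intros t H. unfold dfeas. tauto.
Qed.

Lemma opt_part m n A b c mu x w y s : Kpos mu -> central_path m n A b c mu x w y s ->
  primal_unique_optimal m n A b c mu x w /\ dual_unique_optimal m n A b c mu y s.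
Proof.
  intros Hmu Hcp.
  assert (PF : primal_feasible m n A b x w).
  { destruct Hcp as [Kx [Kw [_ [_ [Px [Pw [_ [_ [Ep _]]]]]]]]]. repeat split; auto. }
  assert (DF : dual_feasible m n A c y s).
  { destruct Hcp as [_ [_ [Ky [Ks [_ [_ [Py [Ps [_ [Ed _]]]]]]]]]]. repeat split; auto. }
  pose proof (cp_ev _ _ _ _ _ _ _ _ _ _ Hcp) as Ecp.
  assert (Popt : primal_optimal m n A b c mu x w).
  { split; auto. intros x' w' PF'.
    destruct (ev_and _ _ (ev_and _ _ Ecp (pf_ev _ _ _ _ _ _ PF')) Hmu) as [T HT].
    exists T. intros t Ht. destruct (HT t Ht) as [[H1 H2] H3].
    pose proof (primal_gap _ _ _ _ _ _ _ _ _ _ _ _ H1 H2) as G.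
    change (pval m n (fun j => c j t) (mu t) (fun j => x j t) (fun i => w i t) <=
            pval m n (fun j => c j t) (mu t) (fun j => x' j t) (fun i => w' i t)).
    destruct H1 as [[Hx [Hw _]] _]. destruct H2 as [Hx' [Hw' _]].
    assert (0 <= mu t * (rsum n (fun j => phi (x' j t / x j t)) + rsum m (fun i => phi (w' i t / w i t)))).
    { apply Rmult_le_pos; [lra|]. apply Rplus_le_le_0_compat; apply rsum_nonneg; intros; apply phi_nonneg;
      apply Rdiv_lt_0_compat; auto. }
    lra. }
  assert (Dopt : dual_optimal m n A b c mu y s).
  { split; auto. intros y' s' DF'.
    destruct (ev_and _ _ (ev_and _ _ Ecp (df_ev _ _ _ _ _ _ DF')) Hmu) as [T HT].
    exists T. intros t Ht. destruct (HT t Ht) as [[H1 H2] H3].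
    pose proof (dual_gap _ _ _ _ _ _ _ _ _ _ _ _ H1 H2) as G.
    change (dval m n (fun i => b i t) (mu t) (fun i => y' i t) (fun j => s' j t) <=
            dval m n (fun i => b i t) (mu t) (fun i => y i t) (fun j => s j t)).
    destruct H1 as [_ [[Hy [Hs _]] _]]. destruct H2 as [Hy' [Hs' _]].
    assert (0 <= mu t * (rsum m (fun i => phi (y' i t / y i t)) + rsum n (fun j => phi (s' j t / s j t)))).
    { apply Rmult_le_pos; [lra|]. apply Rplus_le_le_0_compat; apply rsum_nonneg; intros; apply phi_nonneg;
      apply Rdiv_lt_0_compat; auto. }
    lra. }
  split.
  - split; auto. intros x' w' [PF' Hopt'].
    pose proof (Hopt' x w PF) as Hle.
    assert (E : eventually (fun t => (forall j, (j<n)%nat -> x' j t = x j t) /\ (forall i, (i<m)%nat -> w' i t = w i t))).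
    { destruct (ev_and _ _ (ev_and _ _ (ev_and _ _ Ecp (pf_ev _ _ _ _ _ _ PF')) Hmu) Hle) as [T HT].
      exists T. intros t Ht. destruct (HT t Ht) as [[[H1 H2] H3] H4].
      pose proof (primal_gap _ _ _ _ _ _ _ _ _ _ _ _ H1 H2) as G.
      change (pval m n (fun j => c j t) (mu t) (fun j => x' j t) (fun i => w' i t) <=
              pval m n (fun j => c j t) (mu t) (fun j => x j t) (fun i => w i t)) in H4.
      destruct H1 as [[Hx [Hw _]] _]. destruct H2 as [Hx' [Hw' _]].
      apply (phi_sum_zero n m (mu t)); auto; lra. }
    split.
    + intros j Hj. eapply ev_mono; [|exact E]. intros t [A1 _]. auto.
    + intros i Hi. eapply ev_mono; [|exact E]. intros t [_ A2]. auto.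
  - split; auto. intros y' s' [DF' Hopt'].
    pose proof (Hopt' y s DF) as Hle.
    assert (E : eventually (fun t => (forall i, (i<m)%nat -> y' i t = y i t) /\ (forall j, (j<n)%nat -> s' j t = s j t))).
    { destruct (ev_and _ _ (ev_and _ _ (ev_and _ _ Ecp (df_ev _ _ _ _ _ _ DF')) Hmu) Hle) as [T HT].
      exists T. intros t Ht. destruct (HT t Ht) as [[[H1 H2] H3] H4].
      pose proof (dual_gap _ _ _ _ _ _ _ _ _ _ _ _ H1 H2) as G.
      change (dval m n (fun i => b i t) (mu t) (fun i => y i t) (fun j => s j t) <=
              dval m n (fun i => b i t) (mu t) (fun i => y' i t) (fun j => s' j t)) in H4.
      destruct H1 as [_ [[Hy [Hs _]] _]]. destruct H2 as [Hy' [Hs' _]].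
      apply (phi_sum_zero m n (mu t)); auto; lra. }
    split.
    + intros i Hi. eapply ev_mono; [|exact E]. intros t [A1 _]. auto.
    + intros j Hj. eapply ev_mono; [|exact E]. intros t [_ A2]. auto.
Qed.

Definition RQ := ((nat -> R) * (nat -> R) * (nat -> R) * (nat -> R))%type.
Definition qx (q : RQ) := fst (fst (fst q)).
Definition qw (q : RQ) := snd (fst (fst q)).
Definition qy (q : RQ) := snd (fst q).
Definition qs (q : RQ) := snd q.

Definition solq m n A b c mu t : RQ :=
  epsilon (inhabits ((fun _ : nat => 0), (fun _ : nat => 0), (fun _ : nat => 0), (fun _ : nat => 0)))
          (fun q => rcpt m n A b c mu t (qx q) (qw q) (qy q) (qs q)).

Lemma solq_spec m n A b c mu t : (exists x w y s, rcpt m n A b c mu t x w y s) ->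
  let q := solq m n A b c mu t in rcpt m n A b c mu t (qx q) (qw q) (qy q) (qs q).
Proof.
  intros [x [w [y [s H]]]]. simpl. unfold solq.
  apply (epsilon_spec _ (fun q => rcpt m n A b c mu t (qx q) (qw q) (qy q) (qs q))).
  exists (x, w, y, s). exact H.
Qed.

Definition vK m n A b c mu T (sel : nat) : vec :=
  fun p t => if Rlt_dec T t then
    let q := solq m n A b c mu t in oval sel p (qx q) (qw q) (qy q) (qs q) else 0.

Lemma oval_unique m n a b c mu x w y s x' w' y' s' sel p : 0 < mu -> (p < obnd n m sel)%nat ->
  rcp m n a b c mu x w y s -> rcp m n a b c mu x' w' y' s' ->
  oval sel p x' w' y' s' = oval sel p x w y s.
Proof.
  intros Hmu Hp H H'. destruct (rcp_unique _ _ _ _ _ _ _ _ _ _ _ _ _ _ Hmu H H') as [E1 [E2 [E3 E4]]].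
  destruct sel as [|[|[|]]]; simpl in *; auto.
Qed.

Lemma vK_def m n A b c mu T sel p : Kmat m n A -> Kvec m b -> Kvec n c -> inK mu ->
  (p < obnd n m sel)%nat ->
  (forall t, T < t -> 0 < mu t /\ exists x w y s, rcpt m n A b c mu t x w y s) ->
  definable_fun (vK m n A b c mu T sel p).
Proof.
  intros HA Hb Hc Hmu Hp Hex.
  assert (DG : Def (fun e => (T < e 0%nat /\ exists g, Qf m n A b c mu (ocode n m sel p) (updl e (Lay n m) g))
                           \/ (~ T < e 0%nat /\ e 1%nat = 0))).
  { apply Def_or; apply Def_and.
    - apply (Def_lt (TCst T) (TVar 0)).
    - apply Def_exl. apply Def_Qf; auto.
    - apply Def_not. apply (Def_lt (TCst T) (TVar 0)).
    - apply (Def_eq (TVar 1) (TCst 0)). }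
  destruct DG as [phi Hphi]. exists phi. intros e. rewrite Hphi. unfold vK.
  destruct (Rlt_dec T (e 0%nat)) as [Ht|Ht].
  - destruct (Hex _ Ht) as [Hmu0 Hex0].
    pose proof (solq_spec m n A b c mu (e 0%nat) Hex0) as Hs. simpl in Hs.
    rewrite (Qf_sem m n A b c mu sel p e Hp). split.
    + intros [[_ [x [w [y [s [Hr Ho]]]]]]|[Hn _]]; [|contradiction].
      rewrite Ho. apply (oval_unique _ _ _ _ _ _ _ _ _ _ _ _ _ _ sel p Hmu0 Hp Hs Hr).
    + intros Ho. left. split; auto.
      exists (qx (solq m n A b c mu (e 0%nat))), (qw (solq m n A b c mu (e 0%nat))),
             (qy (solq m n A b c mu (e 0%nat))), (qs (solq m n A b c mu (e 0%nat))).
      split; [exact Hs|exact Ho].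
  - split; [intros [[H _]|[_ H]]; [contradiction|exact H]|intros H; right; auto].
Qed.

Lemma existence m n A b c mu : Kmat m n A -> Kvec m b -> Kvec n c ->
  assumptionA m n A b c -> inK mu -> Kpos mu ->
  exists x w y s : vec, central_path m n A b c mu x w y s.
Proof.
  intros HA Hb Hc [x0 [w0 [y0 [s0 [Kx0 [Kw0 [Ky0 [Ks0 [Px0 [Pw0 [Py0 [Ps0 [Ep0 Ed0]]]]]]]]]]]]] Hmu Hmupos.
  assert (PF : primal_feasible m n A b x0 w0) by (repeat split; auto).
  assert (DF : dual_feasible m n A c y0 s0) by (repeat split; auto).
  destruct (ev_and _ _ (ev_and _ _ (pf_ev _ _ _ _ _ _ PF) (df_ev _ _ _ _ _ _ DF)) Hmupos) as [T HT].
  assert (Hex : forall t, T < t -> 0 < mu t /\ exists x w y s, rcpt m n A b c mu t x w y s).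
  { intros t Ht. destruct (HT t Ht) as [[H1 H2] H3]. split; auto.
    apply real_exists; auto.
    - exists (fun j => x0 j t), (fun i => w0 i t). exact H1.
    - exists (fun i => y0 i t), (fun j => s0 j t). exact H2. }
  set (x := vK m n A b c mu T 0). set (w := vK m n A b c mu T 1).
  set (y := vK m n A b c mu T 2). set (s := vK m n A b c mu T 3).
  assert (Hsol : forall t, T < t -> rcpt m n A b c mu t (fun j => x j t) (fun i => w i t) (fun i => y i t) (fun j => s j t)).
  { intros t Ht. unfold x, w, y, s, vK. destruct (Rlt_dec T t) as [_|]; [|contradiction].
    destruct (Hex t Ht) as [_ Hex0]. exact (solq_spec m n A b c mu t Hex0). }
  exists x, w, y, s.
  assert (EV : eventually (fun t => rcpt m n A b c mu t (fun j => x j t) (fun i => w i t) (fun i => y i t) (fun j => s j t)))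
    by (exists T; exact Hsol).
  unfold central_path. split; [|split; [|split; [|split]]].
  - intros j Hj. apply vK_def; auto.
  - intros i Hi. apply vK_def; auto.
  - intros i Hi. apply vK_def; auto.
  - intros j Hj. apply vK_def; auto.
  - split; [|split; [|split; [|split; [|split; [|split; [|split]]]]]].
    + intros j Hj. eapply ev_mono; [|exact EV]. intros t [[H _] _]. auto.
    + intros i Hi. eapply ev_mono; [|exact EV]. intros t [[_ [H _]] _]. auto.
    + intros i Hi. eapply ev_mono; [|exact EV]. intros t [_ [[H _] _]]. auto.
    + intros j Hj. eapply ev_mono; [|exact EV]. intros t [_ [[_ [H _]] _]]. auto.
    + intros i Hi. eapply ev_mono; [|exact EV]. intros t [[_ [_ H]] _]. auto.
    + intros j Hj. eapply ev_mono; [|exact EV]. intros t [_ [[_ [_ H]] _]]. auto.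
    + intros i Hi. eapply ev_mono; [|exact EV]. intros t [_ [_ [H _]]]. auto.
    + intros j Hj. eapply ev_mono; [|exact EV]. intros t [_ [_ [_ H]]]. auto.
Qed.

Theorem mainTheorem4 (m n : nat) (A : mat) (b c : vec) (mu : R -> R) :
  Kmat m n A -> Kvec m b -> Kvec n c ->
  assumptionA m n A b c ->
  inK mu -> Kpos mu ->
  (exists x w y s : vec, central_path m n A b c mu x w y s) /\
  (forall x w y s : vec, central_path m n A b c mu x w y s ->
     primal_unique_optimal m n A b c mu x w /\
     dual_unique_optimal m n A b c mu y s).
Proof.
  intros HA Hb Hc HAs Hmu Hmupos. split.
  - apply existence; auto.
  - intros x w y s Hcp. apply opt_part; auto.
Qed.
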